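(* Let $\mathcal D$ be a $(\gamma,V)$-stable distribution of $\mathbf X$. Consider a run of the algorithm described in the context in which the event $\mathcal E$ holds. Then the algorithm accepts at least $|V|$ families until the end of the first round $t$ which satisfies $\epsilon_t\le\gamma/(2d)$.
   Context: Setting. $\mathbf{X}=(X_1,\dots,X_d)$ is a random vector; $k$ a fixed positive integer; natural logarithms. A family is $f=\langle X_i,\Pi\rangle$ with $\Pi\subseteq\{X_1,\dots,X_d\}\setminus\{X_i\}$, $|\Pi|\le k$; $\mathcal F_{d,k}$ the set of families; $H(f)=H(X_i\mid\Pi)$. $\mathcal G_{d,k}$ = DAGs over the variables with in-degree $\le k$, identified with their family sets; $\mathcal S(F)=-\sum_{f\in F}H(f)$; $\mathcal S^*=\max_{G\in\mathcal G_{d,k}}\mathcal S(G)$. $\mathcal E_{d,k}$ is the set of Markov equivalence classes (ECs) on $\mathcal G_{d,k}$; graphs in an EC share a score. For $V\subseteq\mathbf X$, $\mathcal G_V$ is the set of DAGs over $V$ with in-degree $\le k$. $(\gamma,V)$-stable: for $\gamma>0$ and $V\subseteq\mathbf X$, (1) in every $G\in\mathcal G_{d,k}$ with $\mathcal S(G)\ge\mathcal S^*-\gamma$ all parents of every variable in $V$ are in $V$; (2) for the marginal distribution on $V$ (over $\mathcal G_V$) there is a unique optimal EC and the score gap between the best and second-best EC is more than $\gamma$. Observation model. Each sample is an independent copy of $\mathbf X$ of which only a chosen set of $k+1$ coordinates is revealed. $\hat H$ is an estimator of $H(f)$ from the samples where all variables of $f$ were observed, and $N(\epsilon,\delta)$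 is such that for any fixed $f$, at least $N(\epsilon,\delta)$ such samples give $|\hat H(f)-H(f)|\le\epsilon$ with probability $\ge1-\delta$. Notation: $\mathcal F_{\mathrm{act}}(\mathcal V)$ = families whose child is not in $\mathcal V\subseteq[d]$; $\mathcal G_j=\{G\in\mathcal G_{d,k}:\mathcal A_j\subseteq G\}$; $E^{(j)}=E\cap\mathcal G_j$; $U(\mathcal A)=\bigcup_{G\in\mathcal A}G$; $\hat H_t(f)$ = estimate from all samples up to round $t$; $\hat{\mathcal S}_t(G)=-\sum_{f\in G}\hat H_t(f)$; $\hat{\mathcal S}_t(\mathcal A)=\max_{G\in\mathcal A}\hat{\mathcal S}_t(G)$. Algorithm (inputs $d,k,\delta\in(0,1),\epsilon,\epsilon_1>0$). Initialize $\mathcal A_1=\emptyset,\mathcal V=\emptyset,N_0=0,t=1,j=1,T=\lceil\log_2(2d\epsilon_1/\epsilon)\rceil$. While $\epsilon_t>\epsilon/(d-|\mathcal V|)$ (a ''round'' $t$): $N_t=N(\epsilon_t/2,\delta/(T|\mathcal F_{\mathrm{act}}(\mathcal V)|))$; observe each $(k+1)$-subset of $[d]$ not contained in $\mathcal V$ in $N_t-N_{t-1}$ new samples; repeat the following ''iteration'' until $\mathcal A_j=\mathcal A_{j-1}$: $\theta_j=(d-|\mathcal V|)\epsilon_t$; $\hat G_j\in\arg\max_{G\in\mathcal G_j}\hat{\mathcal S}_t(G)$, $\hat E_j$ its EC; $L_j=\{E\in\mathcal E_{d,k}:E^{(j)}\neq\emptyset,\hat{\mathcal S}_t(\hat E_j^{(j)})-\hat{\mathcal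 S}_t(E^{(j)})\le\theta_j\}$; if some $f\in U(\hat E_j^{(j)})\cap\mathcal F_{\mathrm{act}}(\mathcal V)$ satisfies $f\in U(E^{(j)})$ for all $E\in L_j$, accept one such $f=\langle X_v,\Pi\rangle$: $\mathcal V\leftarrow\mathcal V\cup\{v\}$, $\mathcal A_{j+1}=\mathcal A_j\cup\{f\}$; else $\mathcal A_{j+1}=\mathcal A_j$; $j\leftarrow j+1$. After the iterations, if $|\mathcal V|=d$ return $\mathcal A_j$; else $t\leftarrow t+1$, $\epsilon_t=\epsilon_{t-1}/2$. After the while loop: $\epsilon_{\mathrm{last}}=\epsilon/(d-|\mathcal V|)$, $N_T=N(\epsilon_{\mathrm{last}}/2,\delta/(T|\mathcal F_{\mathrm{act}}(\mathcal V)|))$, observe remaining subsets in $N_T-N_{T-1}$ more samples, return a maximizer of $\hat{\mathcal S}_T$ over $\mathcal G_j$. Event: with $\mathcal V_t$ the value of $\mathcal V$ at the start of round $t$, $\mathcal E:=\{\forall t\in[T],\forall f\in\mathcal F_{\mathrm{act}}(\mathcal V_t): |\hat H_t(f)-H(f)|\le\epsilon_t/2\}$. *)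

(* Defs.v *)
From mathcomp Require Import all_boot all_order all_algebra.
From mathcomp Require Import boolp reals exp.

Set Implicit Arguments.
Unset Strict Implicit.
Unset Printing Implicit Defensive.

Import Order.TTheory GRing.Theory Num.Theory.
Local Open Scope ring_scope.

(* Random vector X = (X_1,...,X_d) with values in a finite alphabet A.        *)

Definition assign (d : nat) (A : finType) := {ffun 'I_d -> A}.

Definition is_pmf (R : realType) (d : nat) (A : finType)
  (P : {ffun (assign d A) -> R}) : Prop :=
  (forall x, 0 <= P x) /\ \sum_x P x = 1.

Definition margp (R : realType) (d : nat) (A : finType)
  (P : {ffun (assign d A) -> R}) (S : {set 'I_d}) (y : assign d A) : R :=
  \sum_(z : assign d A | [forall i in S, z i == y i]) P z.

(* joint Shannon entropy (natural log) of the sub-vector X_S *)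
Definition Hjoint (R : realType) (d : nat) (A : finType)
  (P : {ffun (assign d A) -> R}) (S : {set 'I_d}) : R :=
  - \sum_(y : assign d A) P y * ln (margp P S y).

(* families f = <X_i, Pi> ; child f = f.1, parent set f.2 *)
Definition fam (d : nat) := ('I_d * {set 'I_d})%type.

Definition is_family (d k : nat) (f : fam d) : bool :=
  (f.1 \notin f.2) && (#|f.2| <= k)%N.

Definition Hfam (R : realType) (d : nat) (A : finType)
  (P : {ffun (assign d A) -> R}) (f : fam d) : R :=
  Hjoint P (f.1 |: f.2) - Hjoint P f.2.

(* Directed graphs on the variables, given by their parent sets.             *)

Definition graph (d : nat) := {ffun 'I_d -> {set 'I_d}}.

Definition edge (d : nat) (G : graph d) : rel 'I_d := fun x y => x \in G y.

Definition acyclic (d : nat) (G : graph d) : Prop :=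
  forall i j : 'I_d, j \in G i -> ~~ connect (edge G) i j.

Definition DAGk (d k : nat) (G : graph d) : Prop :=
  (forall i, (#|G i| <= k)%N) /\ acyclic G.

Definition fams (d : nat) (G : graph d) : {set fam d} :=
  [set (i, G i) | i : 'I_d].

Definition Ufams (d : nat) (B : {set graph d}) : {set fam d} :=
  \bigcup_(G in B) fams G.

Definition adj (d : nat) (G : graph d) : rel 'I_d :=
  fun x y => (x \in G y) || (y \in G x).

Definition trail (d : nat) (G : graph d) (x y : 'I_d) (p : seq 'I_d) : bool :=
  [&& path (adj G) x p, last x p == y & uniq (x :: p)].

Definition open_at (d : nat) (G : graph d) (Z : {set 'I_d})
  (x : 'I_d) (p : seq 'I_d) (n : nat) : bool :=
  let q := x :: p in
  let a := nth x q n.-1 in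
  let m := nth x q n in
  let b := nth x q n.+1 in
  if (a \in G m) && (b \in G m)
  then [exists w, connect (edge G) m w && (w \in Z)]
  else m \notin Z.

Definition d_connected (d : nat) (G : graph d) (x y : 'I_d) (Z : {set 'I_d}) : Prop :=
  exists p : seq 'I_d, trail G x y p /\
    forall n, (0 < n)%N -> (n < size p)%N -> open_at G Z x p n.

Definition d_separated (d : nat) (G : graph d) (x y : 'I_d) (Z : {set 'I_d}) : Prop :=
  ~ d_connected G x y Z.

Definition markov_eq (d : nat) (G1 G2 : graph d) : Prop :=
  forall (x y : 'I_d) (Z : {set 'I_d}), x != y -> x \notin Z -> y \notin Z ->
    (d_separated G1 x y Z <-> d_separated G2 x y Z).

Definition EC (d k : nat) (G : graph d) : {set graph d} :=
  [set G' | `[< DAGk k G' /\ markov_eq G G' >] ].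

Definition Gsub (d k : nat) (Acc : {set fam d}) : {set graph d} :=
  [set G | `[< DAGk k G /\ Acc \subset fams G >] ].

Definition score (R : realType) (d : nat) (H : fam d -> R) (G : graph d) : R :=
  - \sum_(i : 'I_d) H (i, G i).

Definition scoreV (R : realType) (d : nat) (H : fam d -> R)
  (V : {set 'I_d}) (G : graph d) : R :=
  - \sum_(i in V) H (i, G i).

(* maximum of F over a (nonempty) finite set B of graphs; 0 if B is empty *)
Definition setmax (R : realType) (d : nat) (B : {set graph d}) (F : graph d -> R) : R :=
  match [pick G in B] with
  | Some G0 => \big[Num.max/F G0]_(G in B) F G
  | None => 0
  end.

(* G_V : DAGs over V with in-degree <= k (embedded: vertices outside V isolated) *)
Definition DAG_over (d k : nat) (V : {set 'I_d}) (G : graph d) : Prop :=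
  DAGk k G /\ (forall i, (i \in V -> G i \subset V) /\ (i \notin V -> G i = set0)).

Definition stable (R : realType) (d k : nat) (A : finType)
  (P : {ffun (assign d A) -> R}) (gamma : R) (V : {set 'I_d}) : Prop :=
  let H := Hfam P in
  let Sstar := setmax [set G | `[< DAGk k G >] ] (score H) in
  (forall G : graph d, DAGk k G -> Sstar - gamma <= score H G ->
     forall v, v \in V -> G v \subset V) /\
  (exists Gopt : graph d, DAG_over k V Gopt /\
     (forall G, DAG_over k V G -> scoreV H V G <= scoreV H V Gopt) /\
     (forall G, DAG_over k V G -> ~ markov_eq Gopt G ->
        gamma < scoreV H V Gopt - scoreV H V G)).

(* algorithm state: (A_j, V) *)
Definition state (d : nat) := ({set fam d} * {set 'I_d})%type.

(* eps_t = eps_1 / 2^(t-1), rounds numbered from 1 *)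
Definition eps_r (R : realType) (eps1 : R) (t : nat) : R := eps1 / 2 ^+ t.-1.

Definition is_argmax (R : realType) (d k : nat) (Hh : fam d -> R)
  (Acc : {set fam d}) (Gh : graph d) : Prop :=
  Gh \in Gsub k Acc /\ forall G, G \in Gsub k Acc -> score Hh G <= score Hh Gh.

Definition acceptable (R : realType) (d k : nat) (Hh : fam d -> R) (et : R)
  (s : state d) (Gh : graph d) (f : fam d) : Prop :=
  let Acc := s.1 in
  let V := s.2 in
  let theta := (d - #|V|)%:R * et in
  let Ehj := EC k Gh :&: Gsub k Acc in
  [/\ f \in Ufams Ehj,
      is_family k f /\ f.1 \notin V &
      forall G : graph d, DAGk k G ->
        EC k G :&: Gsub k Acc != set0 ->
        setmax Ehj (score Hh) - setmax (EC k G :&: Gsub k Acc) (score Hh) <= theta ->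
        f \in Ufams (EC k G :&: Gsub k Acc)].

Definition accept_step (R : realType) (d k : nat) (Hh : fam d -> R) (et : R)
  (s s' : state d) : Prop :=
  exists (Gh : graph d) (f : fam d),
    [/\ is_argmax k Hh s.1 Gh, acceptable k Hh et s Gh f &
        s' = (f |: s.1, f.1 |: s.2)].

Definition noaccept_step (R : realType) (d k : nat) (Hh : fam d -> R) (et : R)
  (s : state d) : Prop :=
  exists Gh : graph d, is_argmax k Hh s.1 Gh /\
    forall f, ~ acceptable k Hh et s Gh f.

Inductive round_exec (R : realType) (d k : nat) (Hh : fam d -> R) (et : R) :
  state d -> state d -> Prop :=
| round_stop s : noaccept_step k Hh et s -> round_exec k Hh et s s
| round_acc s s' s'' : accept_step k Hh et s s' -> round_exec k Hh et s' s'' ->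
    round_exec k Hh et s s''.

Definition Tmax (R : realType) (d : nat) (eps eps1 : R) : int :=
  Num.ceil (ln (2 * d%:R * eps1 / eps) / ln 2).

(* Main.v *)
Require Import Defs.
From mathcomp Require Import all_boot all_order all_algebra.
From mathcomp Require Import boolp reals exp.
From mathcomp Require Import zify ring lra.
Import Order.TTheory GRing.Theory Num.Theory.

Set Implicit Arguments.
Unset Strict Implicit.
Unset Printing Implicit Defensive.



Section Basics.
Variable d : nat.
Implicit Types (G : graph d) (Z : {set 'I_d}).

Lemma acyc_irr G a : acyclic G -> a \notin G a.
Proof. by move=> ac; apply/negP=> h; have := ac a a h; rewrite connect0. Qed.

Lemma conn_last (e : rel 'I_d) a b : connect e a b -> a != b ->
  exists2 p, connect e a p & e p b.
Proof.
move=> /connectP [s]; elim/last_ind: s => [|s z IH] /=; first by move=> _ -> ; rewrite eqxx.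
rewrite rcons_path last_rcons => /andP [ps ez] -> _.
exists (last a s) => //; apply/connectP; by exists s.
Qed.

Lemma acyc_anti G a b : acyclic G -> connect (edge G) a b -> connect (edge G) b a -> a = b.
Proof.
move=> ac hab hba; apply/eqP; apply/negPn/negP => neq.
have [p hap hpb] := conn_last hab neq.
have := ac b p hpb; rewrite (connect_trans hba hap).
by [].
Qed.

Lemma acyc_2 G a b : acyclic G -> a \in G b -> b \notin G a.
Proof.
move=> ac h; apply/negP => h'; have := ac b a h.
by rewrite connect1.
Qed.

Lemma adjC G a b : adj G a b = adj G b a.
Proof. by rewrite /adj orbC. Qed.

Definition okt G Z (a m b : 'I_d) : bool :=
  if (a \in G m) && (b \in G m)
  then [exists w, connect (edge G) m w && (w \in Z)]
  else m \notin Z.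

Lemma oktC G Z a m b : okt G Z a m b = okt G Z b m a.
Proof. by rewrite /okt andbC. Qed.

Lemma okt_nb G Z a m b b' : b \notin G m -> b' \notin G m ->
  okt G Z a m b = okt G Z a m b'.
Proof. by move=> /negbTE h /negbTE h'; rewrite /okt h h' !andbF. Qed.

Definition trl (x0 : 'I_d) G Z (q : seq 'I_d) : Prop :=
  [/\ uniq q,
      (forall i, (i.+1 < size q)%N -> adj G (nth x0 q i) (nth x0 q i.+1)) &
      (forall i, (0 < i)%N -> (i.+1 < size q)%N ->
          okt G Z (nth x0 q i.-1) (nth x0 q i) (nth x0 q i.+1))].

Lemma trl_def x0 x1 G Z q : trl x0 G Z q -> trl x1 G Z q.
Proof.
case=> u ad op; split=> // [i hi|i hi hi'].
  by rewrite !(set_nth_default x0) //; [apply: ad| lia].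
by rewrite !(set_nth_default x0) //; [apply: op| lia| lia].
Qed.

Definition dcon G a b Z := exists q,
  [/\ (0 < size q)%N, nth a q 0 = a, last a q = b & trl a G Z q].

Lemma dconE G a b Z : d_connected G a b Z <-> dcon G a b Z.
Proof.
split.
  case=> p [/and3P [pa /eqP la un] op]; exists (a :: p); split=> //.
  split=> //.
    move=> i hi.
    by move/pathP: pa => /(_ a i); rewrite /= in hi; apply.
case=> q [sq ha la [un ad op]]; case: q sq ha la un ad op => // a' p _ /= ha; subst a' => la un ad op.
exists p; split.
  apply/and3P; split => //; last exact/eqP.
  by apply/(pathP a) => i hi; apply: (ad i).
by move=> n hn hn'; have := op n hn hn'; rewrite /open_at.
Qed.

Lemma trl_rev x0 G Z q : trl x0 G Z q -> trl x0 G Z (rev q).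
Proof.
case=> u ad op; split; first by rewrite rev_uniq.
  move=> i; rewrite size_rev => hi.
  rewrite !nth_rev; try lia. rewrite adjC.
  have -> : (size q - i.+1 = (size q - i.+2).+1)%N by lia.
  apply: ad; lia.
move=> i hi; rewrite size_rev => hi'.
rewrite !nth_rev; try lia.
have e1 : (size q - i.-1.+1 = (size q - i.+1).+1)%N by lia.
have e3 : (size q - i.+2 = (size q - i.+1).-1)%N by lia.
rewrite e1 e3 oktC.
apply: op; lia.
Qed.

Lemma dcon_sym G a b Z : dcon G a b Z -> dcon G b a Z.
Proof.
case=> q [sq ha lb t]; exists (rev q); split.
- by rewrite size_rev.
- rewrite nth_rev // subn1 nth_last -lb.
  by case: q sq {ha t lb}.
- case: q sq ha {lb t} => // c s _ /= ->.
  by rewrite rev_cons last_rcons.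
- exact: (trl_def b (trl_rev t)).
Qed.

End Basics.



Section Cut.
Variable T : Type.
Lemma size_cut (s : seq T) k l : (k <= l <= size s)%N ->
  size (take k s ++ drop l s) = (k + (size s - l))%N.
Proof. move=> /andP [h1 h2]; rewrite size_cat size_take size_drop; case: ltnP; lia. Qed.

Lemma nth_cut (s : seq T) k l p x0 : (k <= l <= size s)%N ->
  nth x0 (take k s ++ drop l s) p =
  if (p < k)%N then nth x0 s p else nth x0 s (p + (l - k)).
Proof.
move=> /andP [h1 h2]; rewrite nth_cat size_take.
have -> : (if (k < size s)%N then k else size s) = k by case: ltnP; lia.
case: ltnP => hp; first by rewrite nth_take.
rewrite nth_drop; congr nth; lia.
Qed.

End Cut.
Section Cut2.
Variable T : eqType.
Lemma uniq_cut (s : seq T) k l : uniq s -> (k <= l)%N -> uniq (take k s ++ drop l s).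
Proof.
move=> u hkl; apply: (subseq_uniq _ u).
rewrite -{3}(cat_take_drop k s) cat_subseq //.
have -> : drop l s = drop (l - k) (drop k s) by rewrite drop_drop; congr drop; lia.
exact: drop_subseq.
Qed.
End Cut2.

Section Cov.
Variable d : nat.
Implicit Types (G : graph d) (Z : {set 'I_d}).

Definition revg G (x y : 'I_d) : graph d :=
  [ffun i => if i == x then y |: G x else if i == y then G y :\ x else G i].

Definition covered G (x y : 'I_d) := (x \in G y) /\ G y = x |: G x.

Variables (G : graph d) (x y : 'I_d).
Hypothesis ac : acyclic G.
Hypothesis cov : covered G x y.
Local Notation G' := (revg G x y).

Lemma xGy : x \in G y. Proof. by case: cov. Qed.
Lemma xny : x != y.
Proof. by apply/eqP=> e; have := acyc_irr x ac; rewrite {2}e xGy. Qed.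
Lemma yGx : y \notin G x. Proof. exact: acyc_2 ac xGy. Qed.
Lemma xGx : x \notin G x. Proof. exact: acyc_irr. Qed.

Lemma G'x : G' x = y |: G x. Proof. by rewrite ffunE eqxx. Qed.
Lemma G'y : G' y = G x.
Proof.
have yx : (y == x) = false by rewrite eq_sym (negbTE xny).
rewrite ffunE yx eqxx; case: cov => _ ->.
by rewrite setU1K // xGx.
Qed.
Lemma G'o m : m != x -> m != y -> G' m = G m.
Proof. by move=> /negbTE h1 /negbTE h2; rewrite ffunE h1 h2. Qed.

Lemma inGy a : a != x -> (a \in G y) = (a \in G x).
Proof. by move=> h; case: cov => _ ->; rewrite in_setU1 (negbTE h). Qed.

Lemma E2 a b : ~~ ((a == x) && (b == y)) -> ~~ ((a == y) && (b == x)) ->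
  (a \in G' b) = (a \in G b).
Proof.
move=> h1 h2; case: (eqVneq b x) => [eb|bx].
  subst b; rewrite G'x in_setU1; rewrite eqxx andbT in h2; by rewrite (negbTE h2).
case: (eqVneq b y) => [eb|by'].
  subst b; rewrite eqxx andbT in h1; by rewrite G'y inGy.
by rewrite G'o.
Qed.

Lemma adj' a b : adj G' a b = adj G a b.
Proof.
rewrite /adj.
case: (boolP ((a==x)&&(b==y) || (a==y)&&(b==x))) =>
   [/orP [/andP [/eqP-> /eqP->] | /andP [/eqP-> /eqP->]] | h].
- by rewrite G'x in_setU1 eqxx xGy ?orbT.
- by rewrite G'x in_setU1 eqxx xGy ?orbT.
- rewrite negb_or in h; case/andP: h => h1 h2.
  rewrite (E2 h1 h2) E2 //; by rewrite andbC.
Qed.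

Lemma Dclaim a z : connect (edge G) a z ->
  connect (edge G') a z \/ (connect (edge G') a x /\ connect (edge G') y z).
Proof.
move=> /connectP [p pp ->] {z}.
elim: p a pp => [|c p IH] a /=; first by left; rewrite connect0.
move=> /andP [eac pc]; have := IH c pc.
case: (boolP ((a == x) && (c == y))) => [/andP [/eqP ea /eqP ec]|h].
  subst a c => [[h1|[_ h2]]]; by right; rewrite connect0.
have e' : edge G' a c.
  rewrite /edge E2 //; apply/negP => /andP [/eqP ea /eqP ec]; subst a c.
  by move: eac; rewrite /edge (negbTE yGx).
have ca : connect (edge G') a c by rewrite connect1.
case=> [h1|[h1 h2]]; first by left; apply: connect_trans ca h1.
by right; split=> //; apply: connect_trans ca h1.
Qed.

Lemma D1 a z : a != x -> connect (edge G) a z -> connect (edge G') a z.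
Proof.
move=> ax /Dclaim [//|[h1 h2]].
have [p hap hpx] := conn_last h1 ax.
move: hpx; rewrite /edge G'x in_setU1 => /orP [/eqP e|pGx].
  by subst p; apply: connect_trans hap h2.
have py : edge G' p y.
  rewrite /edge G'y //.
by apply: connect_trans (connect_trans hap (connect1 py)) h2.
Qed.

Lemma D2 z : connect (edge G) x z -> connect (edge G') y z.
Proof.
move/Dclaim => [h|[_ h]] //.
apply: connect_trans h; apply: connect1; by rewrite /edge G'x setU11.
Qed.

Lemma T1 Z a m b : okt G Z a m b -> m != x ->
  (m == y) ==> (a != x) && (b != x) -> okt G' Z a m b.
Proof.
move=> o mx hy.
have hE : forall c, (m == y) ==> (c != x) -> (c \in G' m) = (c \in G m).
  move=> c hc; apply: E2; last by rewrite (negbTE mx) andbF.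
  case: (eqVneq m y) hc => [_ /= /negbTE -> //|_ _]; by rewrite andbF.
have ea : (a \in G' m) = (a \in G m).
  by apply: hE; case: (m == y) hy => //= /andP [].
have eb : (b \in G' m) = (b \in G m).
  by apply: hE; case: (m == y) hy => //= /andP [].
move: o; rewrite /okt ea eb; case: ifP => // _ /existsP [w /andP [c wz]].
by apply/existsP; exists w; rewrite wz (D1 mx c).
Qed.

Lemma T2 Z a b : okt G Z a x b -> a != y -> b != y ->
  ~~ ((a \in G x) && (b \in G x)) -> okt G' Z a x b.
Proof.
move=> o ay by' nc; move: o; rewrite /okt G'x !in_setU1 (negbTE ay) (negbTE by') /=.
by rewrite (negbTE nc).
Qed.

(* the parent u of x becomes a parent of y *)
Lemma Lu Z a u : u \in G x -> okt G Z a u x -> okt G' Z a u y.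
Proof.
move=> ux o.
have uy : u \in G y by rewrite inGy // ; apply/eqP=> e; move: ux; rewrite e (negbTE xGx).
have unx : u != x by apply/eqP=> e; move: ux; rewrite e (negbTE xGx).
have uny : u != y by apply/eqP=> e; move: ux; rewrite e (negbTE yGx).
rewrite (@okt_nb _ G' Z a u y x).
- by apply: T1 => //; rewrite (negbTE uny).
- by rewrite G'o //; apply: acyc_2 ac uy.
- by rewrite G'o //; apply: acyc_2 ac ux.
Qed.

Lemma noncol_notin Z a m b : okt G Z a m b -> b \notin G m -> m \notin Z.
Proof. by rewrite /okt => o /negbTE h; move: o; rewrite h andbF. Qed.

Lemma col_desc Z a m b : okt G Z a m b -> a \in G m -> b \in G m ->
  [exists w, connect (edge G) m w && (w \in Z)].
Proof. by move=> o ha hb; move: o; rewrite /okt ha hb. Qed.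

Ltac sif := repeat match goal with
  |- context [if ?c then _ else _] =>
     first [ rewrite (@ifT _ c); [|lia] | rewrite (@ifN _ c); [|lia] ] end.

Lemma trl_cut x0 Z q k l : trl x0 G Z q -> (0 < k)%N -> (k <= l)%N -> (l < size q)%N ->
  adj G' (nth x0 q k.-1) (nth x0 q l) ->
  (forall p, (0 < p)%N -> (p.+1 < k)%N ->
     okt G' Z (nth x0 q p.-1) (nth x0 q p) (nth x0 q p.+1)) ->
  (forall p, (l < p)%N -> (p.+1 < size q)%N ->
     okt G' Z (nth x0 q p.-1) (nth x0 q p) (nth x0 q p.+1)) ->
  ((1 < k)%N -> okt G' Z (nth x0 q k.-2) (nth x0 q k.-1) (nth x0 q l)) ->
  ((l.+1 < size q)%N -> okt G' Z (nth x0 q k.-1) (nth x0 q l) (nth x0 q l.+1)) ->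
  trl x0 G' Z (take k q ++ drop l q).
Proof.
move=> [un ad op] k0 kl ln H1 H2a H2b H3a H3b.
have kls : (k <= l <= size q)%N by lia.
split; first exact: uniq_cut.
  move=> p; rewrite size_cut // => hp; rewrite !nth_cut //.
  case: (ltnP p.+1 k) => h1.
    sif; rewrite adj'; apply: ad; lia.
  case: (ltnP p k) => h2.
    have ep : p = k.-1 by lia.
    subst p; sif.
    by have -> : (k.-1.+1 + (l - k) = l)%N by lia.
  sif; rewrite adj'.
  have -> : (p.+1 + (l - k) = (p + (l - k)).+1)%N by lia.
  apply: ad; lia.
move=> p hp; rewrite size_cut // => hp'; rewrite !nth_cut //.
case: (ltnP p.+1 k) => h1.
  sif; apply: H2a; lia.
case: (ltnP p k) => h2.
  have ep : p = k.-1 by lia.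
  subst p; sif.
  have -> : (k.-1.+1 + (l - k) = l)%N by lia.
  apply: H3a; lia.
case: (leqP p k) => h3.
  have ep : p = k by lia.
  subst p; sif.
  have -> : (k + (l - k) = l)%N by lia.
  have -> : (k.+1 + (l - k) = l.+1)%N by lia.
  apply: H3b; lia.
sif.
have -> : (p.-1 + (l - k) = (p + (l - k)).-1)%N by lia.
have -> : (p.+1 + (l - k) = (p + (l - k)).+1)%N by lia.
apply: H2b; lia.
Qed.

Lemma eqF (m n : nat) : m <> n -> (m == n) = false.
Proof. by move=> h; apply/eqP. Qed.

Lemma trl_set x0 Z q i : trl x0 G Z q -> y \notin q -> (0 < i)%N -> (i.+1 < size q)%N ->
  adj G' (nth x0 q i.-1) y -> adj G' y (nth x0 q i.+1) ->
  (forall p, (0 < p)%N -> (p.+1 < size q)%N -> p != i.-1 -> p != i -> p != i.+1 ->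
     okt G' Z (nth x0 q p.-1) (nth x0 q p) (nth x0 q p.+1)) ->
  ((1 < i)%N -> okt G' Z (nth x0 q i.-2) (nth x0 q i.-1) y) ->
  okt G' Z (nth x0 q i.-1) y (nth x0 q i.+1) ->
  ((i.+2 < size q)%N -> okt G' Z y (nth x0 q i.+1) (nth x0 q i.+2)) ->
  trl x0 G' Z (set_nth x0 q i y).
Proof.
move=> [un ad op] yq i0 iq A1 A2 H2 H3a H3b H3c.
have sz : size (set_nth x0 q i y) = size q by rewrite size_set_nth; lia.
split.
- rewrite set_nthE ifT; last lia.
  rewrite -(cat1s y) uniq_catCA cat1s cons_uniq; apply/andP; split.
    apply: contra yq; rewrite mem_cat => /orP [h|h].
      exact: mem_take h.
    exact: mem_drop h.
  apply: uniq_cut => //; lia.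
- move=> p; rewrite sz => hp; rewrite !nth_set_nth /=.
  case: (eqVneq p i) => [->|h1]; first by rewrite /= (@eqF i.+1 i) //; lia.
  case: (eqVneq p.+1 i) => [h2|h2].
    by subst i.
  rewrite adj'; exact: ad.
- move=> p hp; rewrite sz => hp'; rewrite !nth_set_nth /=.
  case: (eqVneq p i) => [->|h1].
    rewrite /= (@eqF i.-1 i); last lia.
    by rewrite (@eqF i.+1 i); last lia.
  case: (eqVneq p.+1 i) => [h2|h2].
    subst i; rewrite (@eqF p.-1 p.+1); last lia.
    by apply: H3a; lia.
  case: (eqVneq p.-1 i) => [h3|h3].
    subst i; have e : p.-1.+1 = p by lia.
    rewrite e in H3c; apply: H3c; lia.
  apply: H2 => //; apply/eqP; lia.
Qed.

Lemma trl_same x0 Z q : trl x0 G Z q ->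
  (forall p, (p.+1 < size q)%N -> adj G' (nth x0 q p) (nth x0 q p.+1)) ->
  (forall p, (0 < p)%N -> (p.+1 < size q)%N ->
     okt G' Z (nth x0 q p.-1) (nth x0 q p) (nth x0 q p.+1)) ->
  trl x0 G' Z q.
Proof. by case. Qed.

Lemma Ly1 Z u w : okt G Z x y w -> u \in G x -> w != x -> okt G' Z u y w.
Proof.
move=> o ux wx.
rewrite /okt G'y ux /=.
have -> : (w \in G x) = (w \in G y) by rewrite inGy.
move: o; rewrite /okt xGy /=; case: ifP => // _ /existsP [z /andP [c zz]].
by apply/existsP; exists z; rewrite zz D1 // eq_sym xny.
Qed.

Lemma Lx Z u b c : okt G Z u x b -> b \notin G x -> u \notin G x -> u != y ->
  okt G' Z u x c.
Proof.
move=> o bx ux uy; have := noncol_notin o bx => xz.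
by rewrite /okt G'x in_setU1 (negbTE uy) (negbTE ux).
Qed.

Lemma Ly2 Z w : okt G Z x y w -> w \notin G y -> okt G' Z x y w.
Proof.
move=> o wy; have := noncol_notin o wy => yz.
by rewrite /okt G'y (negbTE xGx).
Qed.

Lemma Ly3 Z u b c : [exists w, connect (edge G) x w && (w \in Z)] ->
  okt G Z b y c -> c != x -> u \in G x -> okt G' Z u y c.
Proof.
move=> /existsP [z /andP [cz zz]] o cx ux.
rewrite /okt G'y ux /= -(inGy cx).
case: ifP => cy.
  by apply/existsP; exists z; rewrite zz D2.
by apply: (noncol_notin o); rewrite cy.
Qed.

Lemma cut_ends (T : Type) x0 (q : seq T) k l : (0 < k)%N -> (k <= l)%N -> (l < size q)%N ->
  [/\ (0 < size (take k q ++ drop l q))%N,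
      nth x0 (take k q ++ drop l q) 0 = nth x0 q 0 &
      nth x0 (take k q ++ drop l q) (size (take k q ++ drop l q)).-1 = nth x0 q (size q).-1].
Proof.
move=> h0 h1 h2; have kls : (k <= l <= size q)%N by lia.
rewrite size_cut // !nth_cut //; split; first lia.
  by rewrite ifT.
rewrite ifN; last lia.
congr nth; lia.
Qed.

Lemma set_ends (T : Type) x0 (q : seq T) i z : (0 < i)%N -> (i.+1 < size q)%N ->
  [/\ (0 < size (set_nth x0 q i z))%N,
      nth x0 (set_nth x0 q i z) 0 = nth x0 q 0 &
      nth x0 (set_nth x0 q i z) (size (set_nth x0 q i z)).-1 = nth x0 q (size q).-1].
Proof.
move=> h0 h1; rewrite size_set_nth !nth_set_nth /=.
have -> : maxn i.+1 (size q) = size q by lia.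
split; first lia.
  by rewrite (@eqF 0 i) //; lia.
by rewrite (@eqF (size q).-1 i) //; lia.
Qed.

Definition ends x0 (q q' : seq 'I_d) :=
  [/\ (0 < size q')%N, nth x0 q' 0 = nth x0 q 0 &
      nth x0 q' (size q').-1 = nth x0 q (size q).-1].

Lemma nth_pos x0 (q : seq 'I_d) p c : uniq q -> (p < size q)%N -> c \in q ->
  (nth x0 q p == c) = (p == index c q).
Proof.
move=> u hp cq; rewrite -{1}(nth_index x0 cq) nth_uniq //.
by rewrite index_mem.
Qed.

Lemma omem_nth x0 (q : seq 'I_d) n : (n < size q)%N -> nth x0 q n \in q.
Proof. exact: mem_nth. Qed.
Lemma oindex_uniq x0 (q : seq 'I_d) n : uniq q -> (n < size q)%N -> index (nth x0 q n) q = n.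
Proof. by move=> u h; apply: index_uniq. Qed.
Lemma oindex_mem (q : seq 'I_d) c : (index c q < size q)%N = (c \in q).
Proof. exact: index_mem. Qed.

Lemma core_same x0 Z q : trl x0 G Z q ->
  (forall p, (p.+1 < size q)%N ->
     ~~ ((nth x0 q p == x) && (nth x0 q p.+1 == y)) &&
     ~~ ((nth x0 q p == y) && (nth x0 q p.+1 == x))) ->
  (forall p, (0 < p)%N -> (p.+1 < size q)%N -> nth x0 q p = x ->
     ~~ ((nth x0 q p.-1 \in G x) && (nth x0 q p.+1 \in G x))) ->
  trl x0 G' Z q.
Proof.
move=> t cons col; have [un ad op] := t.
apply: trl_same => // [p hp|p hp hp']; first by rewrite adj'; apply: ad.
have c1 := cons p.-1; have c2 := cons p.
have e : p.-1.+1 = p by lia.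
rewrite e in c1.
case/andP: (c1 ltac:(lia)) => c1a c1b; case/andP: (c2 hp') => c2a c2b.
case: (eqVneq (nth x0 q p) x) => hx.
  rewrite hx; apply: T2.
  - by rewrite -hx; apply: op.
  - by apply/negP=> /eqP h; move: c1b; rewrite h hx !eqxx.
  - by apply/negP=> /eqP h; move: c2a; rewrite h hx !eqxx.
  - by apply: col.
apply: T1 => //; first by apply: op.
apply/implyP=> /eqP hy; apply/andP; split.
  by apply/negP => /eqP h; move: c1a; rewrite h hy !eqxx.
by apply/negP => /eqP h; move: c2b; rewrite h hy !eqxx.
Qed.

Lemma core_B x0 Z q i : trl x0 G Z q -> (i.+1 < size q)%N ->
  nth x0 q i = x -> nth x0 q i.+1 = y -> exists q', ends x0 q q' /\ trl x0 G' Z q'.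
Proof.
move=> t hi qx qy; have [un ad op] := t.
have xq : x \in q by rewrite -qx; apply: omem_nth; lia.
have yq : y \in q by rewrite -qy; apply: omem_nth; lia.
have px : forall p, (p < size q)%N -> (nth x0 q p == x) = (p == i).
  move=> p hp; rewrite nth_pos //; congr (_ == _).
  by rewrite -qx oindex_uniq //; lia.
have py : forall p, (p < size q)%N -> (nth x0 q p == y) = (p == i.+1).
  move=> p hp; rewrite nth_pos //; congr (_ == _).
  by rewrite -qy oindex_uniq //; lia.
have T1' : forall p, (0 < p)%N -> (p.+1 < size q)%N -> p != i -> p != i.+1 ->
    okt G' Z (nth x0 q p.-1) (nth x0 q p) (nth x0 q p.+1).
  move=> p h1 h2 h3 h4; apply: T1; first exact: op.
    by rewrite px //; lia.
  by rewrite py //; [rewrite (negbTE h4)|lia].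
case hu: ((0 < i)%N && (nth x0 q i.-1 \in G x)).
  case/andP: hu => i0 ux.
  exists (take i q ++ drop i.+1 q); split; first by apply: cut_ends; lia.
  apply: trl_cut => //; try lia.
  - by rewrite qy /adj G'y ux.
  - move=> p h1 h2; apply: T1' => //; try lia; apply/eqP; lia.
  - move=> p h1 h2; apply: T1' => //; try lia; apply/eqP; lia.
  - move=> h; rewrite qy; apply: Lu => //.
    have := op i.-1 ltac:(lia) ltac:(lia); by rewrite (_ : i.-1.+1 = i) ?qx //; lia.
  - move=> h; rewrite qy; apply: Ly1 => //.
      by rewrite -qx -qy; apply: op; lia.
    by rewrite px; lia.
have hu' : (0 < i)%N -> nth x0 q i.-1 \notin G x.
  by move=> h; apply/negP => h'; move: hu; rewrite h h'.
have uy : (0 < i)%N -> nth x0 q i.-1 != y.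
  by move=> h; rewrite py; lia.
case hw: ((i.+2 < size q)%N && (nth x0 q i.+2 \in G y)).
  case/andP: hw => i2 wy.
  have wx : nth x0 q i.+2 != x by rewrite px; lia.
  have wGx : nth x0 q i.+2 \in G x by rewrite -inGy.
  exists (take i.+1 q ++ drop i.+2 q); split; first by apply: cut_ends; lia.
  apply: trl_cut => //; try lia.
  - by rewrite /= qx /adj G'x in_setU1 wGx orbT orbT.
  - move=> p h1 h2; apply: T1' => //; try lia; apply/eqP; lia.
  - move=> p h1 h2; apply: T1' => //; try lia; apply/eqP; lia.
  - move=> h; rewrite /= qx; apply: (@Lx _ _ y) => //.
    + have := op i ltac:(lia) ltac:(lia); by rewrite qx qy.
    + exact: yGx.
    + apply: hu'; lia.
    + apply: uy; lia.
  - move=> h; rewrite /= qx.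
    have o : okt G' Z y (nth x0 q i.+2) (nth x0 q i.+3).
      have := T1' i.+2 ltac:(lia) ltac:(lia) ltac:(apply/eqP; lia) ltac:(apply/eqP; lia).
      by rewrite /= qy.
    rewrite oktC (@okt_nb _ G' Z _ _ x y); first by rewrite oktC.
      rewrite G'o //; last by rewrite py; lia.
      exact: acyc_2 ac wGx.
    rewrite G'o //; last by rewrite py; lia.
    exact: acyc_2 ac wy.
have hw' : (i.+2 < size q)%N -> nth x0 q i.+2 \notin G y.
  by move=> h; apply/negP => h'; move: hw; rewrite h h'.
exists q; split; first by split=> //; lia.
apply: trl_same => // [p hp|p hp hp']; first by rewrite adj'; apply: ad.
case: (eqVneq p i) => [e|pi].
  subst p; rewrite qx; apply: (@Lx _ _ y).
  - have := op i hp hp'; by rewrite qx qy.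
  - exact: yGx.
  - exact: hu'.
  - exact: uy.
case: (eqVneq p i.+1) => [e|pi1].
  subst p; rewrite /= qx qy; apply: Ly2.
    have := op i.+1 hp hp'; by rewrite /= qx qy.
  exact: hw'.
exact: T1'.
Qed.

Lemma core_A2 x0 Z q i j : trl x0 G Z q -> (0 < i)%N -> (i.+1 < j)%N -> (j < size q)%N ->
  nth x0 q i = x -> nth x0 q j = y ->
  nth x0 q i.-1 \in G x -> nth x0 q i.+1 \in G x ->
  exists q', ends x0 q q' /\ trl x0 G' Z q'.
Proof.
move=> t i0 ij jn qx qy ux wx; have [un ad op] := t.
have xq : x \in q by rewrite -qx; apply: omem_nth; lia.
have yq : y \in q by rewrite -qy; apply: omem_nth; lia.
have px : forall p, (p < size q)%N -> (nth x0 q p == x) = (p == i).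
  move=> p hp; rewrite nth_pos //; congr (_ == _).
  by rewrite -qx oindex_uniq //; lia.
have py : forall p, (p < size q)%N -> (nth x0 q p == y) = (p == j).
  move=> p hp; rewrite nth_pos //; congr (_ == _).
  by rewrite -qy oindex_uniq //; lia.
have T1' : forall p, (0 < p)%N -> (p.+1 < size q)%N -> p != i -> p != j ->
    okt G' Z (nth x0 q p.-1) (nth x0 q p) (nth x0 q p.+1).
  move=> p h1 h2 h3 h4; apply: T1; first exact: op.
    by rewrite px //; lia.
  by rewrite py //; [rewrite (negbTE h4)|lia].
have colx : [exists w, connect (edge G) x w && (w \in Z)].
  have := op i i0 ltac:(lia); rewrite qx => o; exact: col_desc o ux wx.
exists (take i q ++ drop j q); split; first by apply: cut_ends; lia.
apply: trl_cut => //; try lia.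
- by rewrite qy /adj G'y ux.
- move=> p h1 h2; apply: T1' => //; try lia; apply/eqP; lia.
- move=> p h1 h2; apply: T1' => //; try lia; apply/eqP; lia.
- move=> h; rewrite qy; apply: Lu => //.
  have := op i.-1 ltac:(lia) ltac:(lia); by rewrite (_ : i.-1.+1 = i) ?qx //; lia.
- move=> h; rewrite qy; apply: (@Ly3 _ _ (nth x0 q j.-1)) => //.
    have := op j ltac:(lia) h; by rewrite qy.
  by rewrite px; lia.
Qed.

Lemma core_A1 x0 Z q i : trl x0 G Z q -> y \notin q -> (0 < i)%N -> (i.+1 < size q)%N ->
  nth x0 q i = x -> nth x0 q i.-1 \in G x -> nth x0 q i.+1 \in G x ->
  exists q', ends x0 q q' /\ trl x0 G' Z q'.
Proof.
move=> t yq i0 hi qx ux wx; have [un ad op] := t.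
have xq : x \in q by rewrite -qx; apply: omem_nth; lia.
have px : forall p, (p < size q)%N -> (nth x0 q p == x) = (p == i).
  move=> p hp; rewrite nth_pos //; congr (_ == _).
  by rewrite -qx oindex_uniq //; lia.
have ny : forall p, (p < size q)%N -> (nth x0 q p == y) = false.
  move=> p hp; apply/negP => /eqP e; move: yq; rewrite -e omem_nth //.
have colx : [exists w, connect (edge G) x w && (w \in Z)].
  have := op i i0 ltac:(lia); rewrite qx => o; exact: col_desc o ux wx.
exists (set_nth x0 q i y); split; first by apply: set_ends.
apply: trl_set => //.
- by rewrite /adj G'y ux.
- by rewrite /adj G'y wx orbT.
- move=> p h1 h2 h3 h4 h5; apply: T1; first exact: op.
    by rewrite px //; lia.
  by rewrite ny //; lia.
- move=> h; apply: Lu => //.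
  have := op i.-1 ltac:(lia) ltac:(lia); by rewrite (_ : i.-1.+1 = i) ?qx //; lia.
- case/existsP: colx => z /andP [cz zz].
  rewrite /okt G'y ux wx /=; apply/existsP; exists z; by rewrite zz D2.
- move=> h; rewrite oktC; apply: Lu => //.
  have := op i.+1 ltac:(lia) h; by rewrite /= qx oktC.
Qed.

Lemma core x0 Z q : trl x0 G Z q -> (0 < size q)%N ->
  (x \in q -> y \in q -> (index x q < index y q)%N) ->
  exists q', ends x0 q q' /\ trl x0 G' Z q'.
Proof.
move=> t sq ord; have [un ad op] := t.
case: (boolP (x \in q)) => xq; last first.
  exists q; split; first by split.
  apply: core_same => //.
    move=> p hp; apply/andP; split; apply/negP => /andP [/eqP h1 /eqP h2].
      by move: xq; rewrite -h1 omem_nth //; lia.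
    by move: xq; rewrite -h2 omem_nth //; lia.
  by move=> p _ hp e; move: xq; rewrite -e omem_nth //; lia.
set i := index x q.
have hi : (i < size q)%N by rewrite oindex_mem.
have qx : nth x0 q i = x by apply: nth_index.
have px : forall p, (p < size q)%N -> (nth x0 q p == x) = (p == i).
  by move=> p hp; rewrite nth_pos.
have nocol : ~~ [&& (0 < i)%N, (i.+1 < size q)%N, nth x0 q i.-1 \in G x & nth x0 q i.+1 \in G x] ->
   forall p, (0 < p)%N -> (p.+1 < size q)%N -> nth x0 q p = x ->
     ~~ ((nth x0 q p.-1 \in G x) && (nth x0 q p.+1 \in G x)).
  move=> nc p h1 h2 e.
  have ep : p = i by apply/eqP; rewrite -px ?e //; lia.
  by subst p; apply: contra nc => /andP [-> ->]; rewrite h1 h2.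
case: (boolP (y \in q)) => yq.
  set j := index y q.
  have hj : (j < size q)%N by rewrite oindex_mem.
  have qy : nth x0 q j = y by apply: nth_index.
  have py : forall p, (p < size q)%N -> (nth x0 q p == y) = (p == j).
    by move=> p hp; rewrite nth_pos.
  have ij : (i < j)%N by apply: ord.
  case: (eqVneq j i.+1) => hji.
    by apply: (@core_B _ _ _ i) => //; rewrite -?hji //.
  case: (boolP [&& (0 < i)%N, (i.+1 < size q)%N, nth x0 q i.-1 \in G x & nth x0 q i.+1 \in G x]) => cx.
    case/and4P: cx => c1 c2 c3 c4.
    apply: (@core_A2 _ _ _ i j) => //; lia.
  exists q; split; first by split.
  apply: core_same => //; last exact: nocol.
  move=> p hp; apply/andP; split; apply/negP => /andP [h1 h2].
    by move: h1 h2; rewrite px ?py; lia.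
  by move: h1 h2; rewrite px ?py; lia.
case: (boolP [&& (0 < i)%N, (i.+1 < size q)%N, nth x0 q i.-1 \in G x & nth x0 q i.+1 \in G x]) => cx.
  case/and4P: cx => c1 c2 c3 c4.
  exact: (@core_A1 _ _ _ i).
exists q; split; first by split.
apply: core_same => //; last exact: nocol.
have ny : forall p, (p < size q)%N -> (nth x0 q p == y) = false.
  move=> p hp; apply/negP => /eqP e; move: yq; rewrite -e omem_nth //.
move=> p hp; rewrite !ny ?andbF //; lia.
Qed.

Lemma index_rev_o (q : seq 'I_d) c : uniq q -> c \in q ->
  index c (rev q) = (size q - (index c q).+1)%N.
Proof.
move=> u cq; have hi : (index c q < size q)%N by rewrite oindex_mem.
have := @oindex_uniq c (rev q) (size q - (index c q).+1) ltac:(by rewrite rev_uniq)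
   ltac:(rewrite size_rev; lia).
rewrite nth_rev; last lia.
have -> : (size q - (size q - (index c q).+1).+1 = index c q)%N by lia.
by rewrite nth_index.
Qed.

Lemma ends_dcon a Z q q' : ends a q q' -> trl a G' Z q' -> (0 < size q)%N ->
  dcon G' (nth a q 0) (last a q) Z.
Proof.
move=> [s0 h0 hl] t sq; exists q'; split=> //.
- by rewrite (set_nth_default a) // h0.
- rewrite -nth_last (set_nth_default a); last lia.
  by rewrite hl nth_last.
- exact: trl_def t.
Qed.

Lemma C1 a b Z : dcon G a b Z -> dcon G' a b Z.
Proof.
case=> q [sq ha lb t]; have [un _ _] := t.
case: (boolP ((x \in q) && (y \in q) && (index y q < index x q)%N)) => h.
  case/andP: h => /andP [xq yq] iyx.
  have t' := trl_rev t.
  have [q' [e t'']] : exists q', ends a (rev q) q' /\ trl a G' Z q'.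
    apply: core => //; first by rewrite size_rev.
    have hx : (index x q < size q)%N by rewrite oindex_mem.
    rewrite !mem_rev => _ _; rewrite !index_rev_o //; lia.
  have := ends_dcon e t'' ltac:(by rewrite size_rev).
  rewrite nth_rev // subn1 nth_last lb.
  have -> : last a (rev q) = a.
    by case: q sq ha {t t' lb un xq yq iyx e} => // c s _ /= ->; rewrite rev_cons last_rcons.
  exact: dcon_sym.
have [q' [e t'']] : exists q', ends a q q' /\ trl a G' Z q'.
  apply: core => // xq yq.
  move: h; rewrite xq yq /= -leqNgt leq_eqVlt => /orP [/eqP e|] //.
  have : nth a q (index x q) = nth a q (index y q) by rewrite e.
  by rewrite !nth_index // => exy; move: xny; rewrite exy eqxx.
have := ends_dcon e t'' sq; by rewrite ha lb.
Qed.

End Cov.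



Section C.
Variable d : nat.
Implicit Types (G : graph d) (Z : {set 'I_d}).

Definition anc G v := [set a | connect (edge G) a v].
Definition desc G v := [set b | connect (edge G) v b].

Lemma anc_lt G a b : acyclic G -> connect (edge G) a b -> a != b ->
  (#|anc G a| < #|anc G b|)%N.
Proof.
move=> ac ab neq; apply: proper_card; apply/properP; split.
  apply/subsetP => c; rewrite !inE => ca; exact: connect_trans ca ab.
exists b; rewrite !inE ?connect0 //; apply/negP => ba.
by move: neq; rewrite (acyc_anti ac ab ba) eqxx.
Qed.

Lemma desc_lt G a b : acyclic G -> connect (edge G) a b -> a != b ->
  (#|desc G b| < #|desc G a|)%N.
Proof.
move=> ac ab neq; apply: proper_card; apply/properP; split.
  apply/subsetP => c; rewrite !inE => ca; exact: connect_trans ab ca.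
exists a; rewrite !inE ?connect0 //; apply/negP => ba.
by move: neq; rewrite (acyc_anti ac ab ba) eqxx.
Qed.

Lemma rank_acyclic G (r : 'I_d -> nat) : (forall i j, j \in G i -> (r j < r i)%N) -> acyclic G.
Proof.
move=> hr.
have mono : forall a b, connect (edge G) a b -> (r a <= r b)%N.
  move=> a b /connectP [p pp ->]; elim: p a pp => //= c p IH a /andP [e pc].
  have := hr _ _ e; have := IH _ pc; lia.
move=> i j ji; apply/negP => /mono; have := hr _ _ ji; lia.
Qed.

Lemma acyclic_rank G : acyclic G -> forall i j, j \in G i -> (#|anc G j| < #|anc G i|)%N.
Proof.
move=> ac i j ji; apply: anc_lt => //; first by apply: connect1.
by apply/eqP => e; move: ji; rewrite e (negbTE (acyc_irr i ac)).
Qed.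

Section Rev.
Variables (G : graph d) (x y : 'I_d).
Hypothesis ac : acyclic G.
Hypothesis cov : covered G x y.
Local Notation G' := (revg G x y).

Lemma revg_acyclic : acyclic G'.
Proof.
pose r0 := fun v => #|anc G v|.
pose r := fun v => if v == x then (r0 x).*2.+1 else if v == y then (r0 x).*2 else (r0 v).*2.
apply: (@rank_acyclic _ r) => i j.
have hr := acyclic_rank ac.
have xy := xGy cov.
have nxy := xny ac cov.
rewrite /r ffunE.
case: (eqVneq i x) => [ei|ix].
  subst i; rewrite in_setU1 => /orP [/eqP ej|jx].
    subst j; have yx : (y == x) = false by rewrite eq_sym (negbTE nxy).
    by rewrite yx eqxx; lia.
  have jnx : j != x by apply/eqP=> e; move: jx; rewrite e (negbTE (xGx x ac)).
  have jny : j != y by apply/eqP=> e; move: jx; rewrite e (negbTE (yGx ac cov)).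
  rewrite (negbTE jnx) (negbTE jny); have := hr _ _ jx; rewrite /r0; lia.
case: (eqVneq i y) => [ei|iy].
  subst i; rewrite in_setD1 => /andP [jx jy]; rewrite (negbTE jx).
  have yx : (y == x) = false by rewrite eq_sym (negbTE nxy).
  rewrite ?yx.
  have jGx : j \in G x by rewrite -(inGy cov).
  have jny : j != y by apply/eqP=> e; move: jGx; rewrite e (negbTE (yGx ac cov)).
  rewrite (negbTE jny); have := hr _ _ jGx; rewrite /r0; lia.
move=> ji.
case: (eqVneq j x) => [e|jx].
  subst j; have := hr _ _ ji; rewrite /r0; lia.
case: (eqVneq j y) => [e|jy].
  subst j; have := hr _ _ ji; have := hr _ _ xy; rewrite /r0; lia.
have := hr _ _ ji; rewrite /r0; lia.
Qed.

Lemma revg_cov : covered G' y x.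
Proof.
split; first by rewrite (G'x G x y) setU11.
by rewrite (G'x G x y) (G'y ac cov).
Qed.

Lemma revg_inv : revg G' y x = G.
Proof.
apply/ffunP => i; rewrite [LHS]ffunE.
case: (eqVneq i y) => [->|iy].
  by rewrite (G'y ac cov); case: cov => _ ->.
case: (eqVneq i x) => [->|ix].
  by rewrite (G'x G x y) setU1K // (yGx ac cov).
by rewrite (G'o G ix iy).
Qed.

Lemma markov_rev : markov_eq G G'.
Proof.
move=> a b Z _ _ _; rewrite /d_separated !dconE; split=> h1 h2; apply: h1.
  have := C1 revg_acyclic revg_cov h2; by rewrite revg_inv.
exact: C1 h2.
Qed.

Local Open Scope ring_scope.
Lemma score_rev (R : realType) (A : finType) (P : {ffun assign d A -> R}) :
  score (Hfam P) G' = score (Hfam P) G.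
Proof.
rewrite /score; congr (- _).
have nxy := xny ac cov.
rewrite (bigD1 x) //= (bigD1 y) //=; last by rewrite eq_sym.
rewrite [RHS](bigD1 x) //= [in RHS](bigD1 y) //=; last by rewrite eq_sym.
rewrite addrA [RHS]addrA; congr (_ + _); last first.
  apply: eq_bigr => i /andP [ix iy]; by rewrite (G'o G ix iy).
rewrite (G'x G x y) (G'y ac cov); case: cov => _ ->.
rewrite /Hfam /= setUCA.
by rewrite addrA subrK [RHS]addrC addrA subrK.
Qed.

Lemma adj_rev a b : adj G' a b = adj G a b.
Proof. exact: adj'. Qed.

End Rev.
End C.



Section D.
Variable d : nat.
Implicit Types (G : graph d) (Z : {set 'I_d}).

Definition vstr G (a c b : 'I_d) :=
  [&& a \in G c, b \in G c, a != b & ~~ adj G a b].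
Definition skel_eq G1 G2 := forall a b, adj G1 a b = adj G2 a b.
Definition vs_eq G1 G2 := forall a c b, vstr G1 a c b = vstr G2 a c b.
Definition Delta G1 G2 : {set 'I_d * 'I_d} :=
  [set p | (p.1 \in G1 p.2) && (p.2 \in G2 p.1)].

Lemma vstr_rev G x y a c b : acyclic G -> covered G x y ->
  vstr (revg G x y) a c b = vstr G a c b.
Proof.
move=> ac cov; rewrite /vstr !adj_rev //.
have nxy := xny ac cov.
have yGx' := yGx ac cov; have xGx' := xGx x ac.
have adjy : forall u, u \in G x -> adj G y u.
  move=> u ux; rewrite /adj (inGy cov) ?ux ?orbT //.
  by apply/eqP=> e; move: ux; rewrite e (negbTE xGx').
have adjx : forall u, u \in G x -> adj G x u.
  by move=> u ux; rewrite /adj ux orbT.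
case: (eqVneq c x) => [e|cx].
  subst c; rewrite (G'x G x y) !in_setU1.
  case: (eqVneq a y) => [e|ay].
    subst a; rewrite (negbTE yGx') /=.
    case: (eqVneq b y) => [e|by']; first by subst b; rewrite ?eqxx /= ?andbF.
    rewrite /=; case: (boolP (b \in G x)) => //= bx.
    by rewrite adjy // andbF.
  case: (eqVneq b y) => [e|by'] /=; last by [].
  subst b; rewrite (negbTE yGx') /= ?andbF.
  case: (boolP (a \in G x)) => //= ax.
  by rewrite adjC adjy // !andbF.
case: (eqVneq c y) => [e|cy].
  subst c; rewrite (G'y ac cov); case: (cov) => _ ->; rewrite !in_setU1.
  case: (eqVneq a x) => [e|ax].
    subst a; rewrite (negbTE xGx') /=.
    case: (eqVneq b x) => [e|bx']; first by subst b; rewrite ?eqxx ?andbF.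
    rewrite /=; case: (boolP (b \in G x)) => //= bx.
    by rewrite adjx // !andbF.
  case: (eqVneq b x) => [e|bx] /=; last by [].
  subst b; rewrite (negbTE xGx') /= ?andbF.
  case: (boolP (a \in G x)) => //= ax'.
  by rewrite adjC adjx // !andbF.
by rewrite (G'o G cx cy).
Qed.

Lemma Delta_rev G G2 x y : acyclic G -> acyclic G2 -> covered G x y -> (x, y) \in Delta G G2 ->
  Delta (revg G x y) G2 = Delta G G2 :\ (x, y).
Proof.
move=> ac ac2 cov; rewrite inE /= => /andP [_ yx2].
have yx : (y == x) = false by rewrite eq_sym (negbTE (xny ac cov)).
have xy : (x == y) = false by apply/negbTE; exact: xny ac cov.
apply/setP => [[a b]]; rewrite !inE /=.
case: (eqVneq a y) => [e|ay].
  subst a; case: (eqVneq b x) => [e|bx].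
    subst b; rewrite (G'x G x y) setU11 /=.
    have -> : (x \in G2 y) = false by apply/negbTE; apply: acyc_2 ac2 yx2.
    by rewrite !andbF.
  rewrite E2 //; first by rewrite xpair_eqE yx.
    by rewrite yx.
  by rewrite (negbTE bx) andbF.
case: (eqVneq a x) => [e|ax].
  subst a; case: (eqVneq b y) => [e|by'].
    by subst b; rewrite (G'y ac cov) (negbTE (xGx x ac)) ?eqxx.
  rewrite E2 //; first by rewrite xpair_eqE ?eqxx (negbTE by').
    by rewrite (negbTE by') ?andbF.
  by rewrite ?eqxx ?yx ?xy.
rewrite E2 //; first by rewrite xpair_eqE (negbTE ax).
  by rewrite (negbTE ax).
by rewrite (negbTE ay).
Qed.

Lemma Delta0 G1 G2 : skel_eq G1 G2 -> Delta G1 G2 = set0 -> G1 = G2.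
Proof.
move=> sk D0; apply/ffunP => b; apply/setP => a.
have nD : forall u v, (u \in G1 v) && (v \in G2 u) = false.
  move=> u v; apply/negbTE; apply/negP => h.
  have : (u, v) \in Delta G1 G2 by rewrite inE.
  by rewrite D0 inE.
apply/idP/idP => h.
  have := sk a b; rewrite /adj h /= => /esym /orP [//|h'].
  by have := nD a b; rewrite h h'.
have := sk a b; rewrite /adj h /= => /orP [//|h'].
by have := nD b a; rewrite h h'.
Qed.

Lemma ex_min (T : finType) (S : {set T}) (f : T -> nat) : S != set0 ->
  exists2 v, v \in S & forall w, w \in S -> (f v <= f w)%N.
Proof.
case/set0Pn => v0 v0S.
case: (arg_minnP f v0S) => v vS vmin.
by exists v.
Qed.

Lemma chick_step G1 G2 : acyclic G1 -> acyclic G2 -> skel_eq G1 G2 -> vs_eq G1 G2 ->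
  Delta G1 G2 != set0 -> exists x y, (x, y) \in Delta G1 G2 /\ covered G1 x y.
Proof.
move=> ac1 ac2 sk vs D0.
pose Y := [set v | [exists u, (u, v) \in Delta G1 G2]].
have Y0 : Y != set0.
  case/set0Pn: D0 => [[u v]] h; apply/set0Pn; exists v; rewrite inE; apply/existsP; by exists u.
have [y yY ymin] := ex_min (fun v => #|anc G1 v|) Y0.
pose X := [set u | (u, y) \in Delta G1 G2].
have X0 : X != set0.
  move: yY; rewrite inE => /existsP [u h]; apply/set0Pn; exists u; by rewrite inE.
have [x xX xmax] := ex_min (fun v => #|desc G1 v|) X0.
move: xX; rewrite !inE /= => /andP [xy1 yx2].
exists x, y; split; first by rewrite inE /= xy1 yx2.
have noY : forall v, v \in Y -> connect (edge G1) v y -> v = y.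
  move=> v vY c; apply/eqP; apply/negPn/negP => nv.
  have := anc_lt ac1 c nv; have := ymin v vY; lia.
have noX : forall v, v \in X -> connect (edge G1) x v -> v = x.
  move=> v vX c; apply/eqP; apply/negPn/negP => nv.
  have := desc_lt ac1 c ltac:(by rewrite eq_sym); have := xmax v vX; lia.
have irr1 := fun v => acyc_irr v ac1.
have irr2 := fun v => acyc_irr v ac2.
have xny' : x != y by apply/eqP => e; move: xy1; rewrite e (negbTE (irr1 y)).
have yGx1 : y \notin G1 x by apply: acyc_2 ac1 xy1.
have xGy2 : x \notin G2 y by apply: acyc_2 ac2 yx2.
split=> //; apply/setP => a; rewrite in_setU1.
case: (eqVneq a x) => [->|ax] /=; first by [].
apply/idP/idP => h.
-
  have adjax : adj G1 a x.
    apply/negPn/negP => nadj.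
    have v1 : vstr G1 a y x by rewrite /vstr h xy1 ax nadj.
    by move: v1; rewrite vs /vstr (negbTE xGy2) andbF.
  case/orP: adjax => // xa.
  case: (boolP (y \in G2 a)) => ya2.
    have aX : a \in X by rewrite !inE /= h ya2.
    have := noX a aX (connect1 xa); by move/eqP: ax.
  have ay2 : a \in G2 y.
    by have := sk a y; rewrite /adj h /= => /esym /orP [//|]; rewrite (negbTE ya2).
  case: (boolP (x \in G2 a)) => xa2.
    have c2 : connect (edge G2) y a by apply: connect_trans (connect1 (yx2 : edge G2 y x)) (connect1 (xa2 : edge G2 x a)).
    by have := ac2 _ _ ay2; rewrite c2.
  have ax2 : a \in G2 x.
    by have := sk a x; rewrite /adj xa orbT => /esym /orP [//|]; rewrite (negbTE xa2).
  have aY : a \in Y by rewrite inE; apply/existsP; exists x; rewrite !inE /= xa.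
  have e := noY a aY (connect1 h); by move: h; rewrite e (negbTE (irr1 y)).
-
  have ay : a != y by apply/eqP => e; move: h; rewrite e (negbTE yGx1).
  have ax2 : a \in G2 x.
    have := sk a x; rewrite /adj h /= => /esym /orP [//|xa2].
    have xY : x \in Y by rewrite inE; apply/existsP; exists a; rewrite !inE /= h xa2.
    have := noY x xY (connect1 xy1) => e; by move: xny'; rewrite e eqxx.
  case: (boolP (adj G1 a y)) => adjay.
    case/orP: adjay => // ya.
    have c1 : connect (edge G1) y x by apply: connect_trans (connect1 (ya : edge G1 y a)) (connect1 (h : edge G1 a x)).
    by have := ac1 _ _ xy1; rewrite c1.
  have v2 : vstr G2 a x y by rewrite /vstr ax2 yx2 ay -sk adjay.
  by move: v2; rewrite -vs /vstr (negbTE yGx1) andbF.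
Qed.

Lemma chick_ind (Q : graph d -> Prop) G1 G2 : acyclic G1 -> acyclic G2 ->
  skel_eq G1 G2 -> vs_eq G1 G2 -> Q G1 ->
  (forall K x y, acyclic K -> covered K x y -> skel_eq K G2 -> Q K -> Q (revg K x y)) ->
  Q G2.
Proof.
move=> ac1 ac2 sk vs q1 step.
move: {2}#|Delta G1 G2| (leqnn #|Delta G1 G2|) => n.
elim: n G1 ac1 sk vs q1 => [|n IH] G1 ac1 sk vs q1 hn.
  have D0 : Delta G1 G2 = set0 by apply/eqP; rewrite -cards_eq0; lia.
  by rewrite -(Delta0 sk D0).
case: (eqVneq (Delta G1 G2) set0) => [D0|D0]; first by rewrite -(Delta0 sk D0).
have [x [y [xyD cov]]] := chick_step ac1 ac2 sk vs D0.
apply: (IH (revg G1 x y)).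
- exact: revg_acyclic.
- by move=> a b; rewrite adj_rev.
- by move=> a c b; rewrite vstr_rev.
- exact: step.
- rewrite Delta_rev //; rewrite (cardsD1 (x, y)) xyD /= add1n ltnS in hn; exact: hn.
Qed.

Lemma dcon_adj G a b Z : a != b -> adj G a b -> dcon G a b Z.
Proof.
move=> ab h; exists [:: a; b]; split => //; split => //=.
- by rewrite inE andbT.
- by case=> [|[|i]] //= _; rewrite adjC.
- by case=> [|[|i]].
Qed.

Lemma dcon_v G a c b Z : a != b -> a != c -> b != c -> adj G a c -> adj G c b ->
  okt G Z a c b -> dcon G a b Z.
Proof.
move=> ab ac bc h1 h2 o; exists [:: a; c; b]; split => //; split => //=.
- by rewrite !inE negb_or ac ab /= eq_sym bc.
- by case=> [|[|[|i]]] //= _.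
- by case=> [|[|[|i]]] //= _.
Qed.

Lemma sep_par G a b : acyclic G -> a != b -> ~~ adj G a b ->
  ~~ connect (edge G) b a -> ~ dcon G a b (G b).
Proof.
move=> ac ab nadj nba [q [sq ha lb [un ad op]]].
set m := (size q).-1.
have qb : nth a q m = b by rewrite /m nth_last.
have m1 : (1 <= m)%N.
  case: (ltnP 0 m) => // h.
  have em : m = 0%N by lia.
  by move: qb; rewrite em ha => e; move: ab; rewrite e eqxx.
have m2 : (2 <= m)%N.
  case: (ltnP 1 m) => // h.
  have em : m = 1%N by lia.
  have := ad 0 ltac:(rewrite /m in em; lia); rewrite ha.
  by rewrite -em qb (negbTE nadj).
have claim : forall k, (1 <= k <= m)%N ->
    connect (edge G) b (nth a q (m - k)) /\ nth a q (m - k).+1 \in G (nth a q (m - k)).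
  elim=> [//|k IH] /andP [_ hk].
  case: (eqVneq k 0) => [e|k0].
    subst k.
    have e1 : (m - 1).+1 = m by lia.
    rewrite e1 qb.
    have := ad (m - 1) ltac:(rewrite /m; lia); rewrite e1 qb.
    case/orP => h.
      have := op (m - 1) ltac:(lia) ltac:(rewrite /m; lia); rewrite e1 qb => o.
      have := noncol_notin o (acyc_2 ac h); by rewrite h.
    by split=> //; apply: connect1.
  have [c1 e1] := IH ltac:(lia).
  set p := (m - k)%N in c1 e1.
  have ep : (m - k.+1).+1 = p by rewrite /p; lia.
  have epp : (m - k.+1) = p.-1 by rewrite /p; lia.
  rewrite ep epp.
  have o := op p ltac:(rewrite /p; lia) ltac:(rewrite /p /m; lia).
  case: (boolP (nth a q p.-1 \in G (nth a q p))) => h.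
    have /existsP [w /andP [cw wb]] := col_desc o h e1.
    by have := ac b w wb; rewrite (connect_trans c1 cw).
  have := ad p.-1 ltac:(rewrite /p /m; lia).
  have -> : p.-1.+1 = p by rewrite /p; lia.
  rewrite /adj (negbTE h) /= => h'.
  split=> //; apply: connect_trans c1 (connect1 h').
have [c _] := claim m ltac:(lia).
by rewrite subnn ha in c; rewrite c in nba.
Qed.

Lemma sepZ G a b : acyclic G -> a != b -> ~~ adj G a b ->
  exists Z, [/\ a \notin Z, b \notin Z & ~ dcon G a b Z].
Proof.
move=> ac ab nadj.
case: (boolP (connect (edge G) b a)) => c.
  have nab : ~~ connect (edge G) a b.
    apply/negP => c'; move: ab; by rewrite (acyc_anti ac c' c) eqxx.
  exists (G a); split.
  - exact: acyc_irr.
  - by move: nadj; rewrite /adj negb_or => /andP [].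
  - move=> h; apply: (@sep_par G b a ac) => //.
    + by rewrite eq_sym.
    + by rewrite adjC.
    + exact: dcon_sym.
exists (G b); split.
- by move: nadj; rewrite /adj negb_or => /andP [].
- exact: acyc_irr.
- exact: sep_par.
Qed.

Lemma markov_dcon G1 G2 a b Z : markov_eq G1 G2 -> a != b -> a \notin Z -> b \notin Z ->
  dcon G1 a b Z -> dcon G2 a b Z.
Proof.
move=> m ab az bz h1; case: (pselect (dcon G2 a b Z)) => // h2.
have := (m a b Z ab az bz).2; rewrite /d_separated !dconE => h.
by case: (h h2).
Qed.

Lemma markov_sym G1 G2 : markov_eq G1 G2 -> markov_eq G2 G1.
Proof. by move=> m a b Z h1 h2 h3; split; apply (m a b Z h1 h2 h3). Qed.

Lemma markov_trans G1 G2 G3 : markov_eq G1 G2 -> markov_eq G2 G3 -> markov_eq G1 G3.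
Proof.
move=> m1 m2 a b Z h1 h2 h3; split => h.
  by apply (m2 a b Z h1 h2 h3); apply (m1 a b Z h1 h2 h3).
by apply (m1 a b Z h1 h2 h3); apply (m2 a b Z h1 h2 h3).
Qed.

Lemma markov_refl G : markov_eq G G.
Proof. by []. Qed.

Lemma skel_half G1 G2 a b : markov_eq G1 G2 -> acyclic G2 -> a != b ->
  adj G1 a b -> adj G2 a b.
Proof.
move=> m ac2 ab h; apply/negPn/negP => nadj.
have [Z [az bz nd]] := sepZ ac2 ab nadj.
apply: nd; apply: (markov_dcon m) => //; exact: dcon_adj.
Qed.

Lemma markov_skel G1 G2 : markov_eq G1 G2 -> acyclic G1 -> acyclic G2 -> skel_eq G1 G2.
Proof.
move=> m ac1 ac2 a b.
case: (eqVneq a b) => [->|ab].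
  by rewrite /adj !orbb (negbTE (acyc_irr b ac1)) (negbTE (acyc_irr b ac2)).
apply/idP/idP; first exact: skel_half.
apply: skel_half => //; exact: markov_sym.
Qed.

Lemma vs_half G1 G2 a c b : markov_eq G1 G2 -> acyclic G1 -> acyclic G2 ->
  vstr G1 a c b -> vstr G2 a c b.
Proof.
move=> m ac1 ac2 /and4P [ac' bc ab nadj].
have sk := markov_skel m ac1 ac2.
have anc : a != c by apply/eqP => e; move: ac'; rewrite e (negbTE (acyc_irr c ac1)).
have bnc : b != c by apply/eqP => e; move: bc; rewrite e (negbTE (acyc_irr c ac1)).
have nadj2 : ~~ adj G2 a b by rewrite -sk.
have adjac : adj G2 a c by rewrite -sk /adj ac'.
have adjcb : adj G2 c b by rewrite -sk /adj bc orbT.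
have [Z [az bz nd]] := sepZ ac2 ab nadj2.
case: (boolP (c \in Z)) => cz.
  exfalso; apply: nd; apply: (markov_dcon m) => //.
  apply: (@dcon_v _ a c b) => //.
  - by rewrite /adj ac'.
  - by rewrite /adj bc orbT.
  - rewrite /okt ac' bc /=; apply/existsP; exists c; by rewrite connect0 cz.
case: (boolP ((a \in G2 c) && (b \in G2 c))) => h.
  case/andP: h => h1 h2; by rewrite /vstr h1 h2 ab nadj2.
exfalso; apply: nd; apply: (@dcon_v _ a c b) => //.
by rewrite /okt (negbTE h).
Qed.

Lemma markov_vs G1 G2 : markov_eq G1 G2 -> acyclic G1 -> acyclic G2 -> vs_eq G1 G2.
Proof.
move=> m ac1 ac2 a c b; apply/idP/idP; first exact: vs_half.
apply: vs_half => //; exact: markov_sym.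
Qed.

End D.



Section E.
Variable d : nat.
Implicit Types (G H K : graph d) (Z : {set 'I_d}).

Lemma score_markov (R : realType) (A : finType) (P : {ffun assign d A -> R}) G1 G2 :
  markov_eq G1 G2 -> acyclic G1 -> acyclic G2 ->
  score (Hfam P) G1 = score (Hfam P) G2.
Proof.
move=> m ac1 ac2.
apply: (@chick_ind _ (fun K => score (Hfam P) G1 = score (Hfam P) K) G1 G2) => //.
- exact: markov_skel.
- exact: markov_vs.
- by move=> K x y acK covK _ ->; rewrite score_rev.
Qed.

Variable Vs : {set 'I_d}.

Definition glue K H : graph d := [ffun i => if i \in Vs then K i else H i].
Definition restr G : graph d := [ffun i => if i \in Vs then G i else set0].

Lemma glue_in K H (i : 'I_d) : i \in Vs -> glue K H i = K i.
Proof. by move=> h; rewrite ffunE h. Qed.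
Lemma glue_out K H (i : 'I_d) : i \notin Vs -> glue K H i = H i.
Proof. by move=> h; rewrite ffunE (negbTE h). Qed.

Lemma glue_acyclic K H : acyclic K -> acyclic H ->
  (forall i, i \in Vs -> K i \subset Vs) -> acyclic (glue K H).
Proof.
move=> acK acH cl.
have g1 : forall a b, connect (edge (glue K H)) a b -> b \in Vs ->
    a \in Vs /\ connect (edge K) a b.
  move=> a b /connectP [p pp ->] {b}.
  elim: p a pp => [|c p IH] a /=; first by move=> _ h; split => //; rewrite connect0.
  move=> /andP [e pc] hl; have [cV cc] := IH c pc hl.
  move: e; rewrite /edge glue_in // => e.
  split; first exact: (subsetP (cl c cV)).
  apply: connect_trans cc; exact: connect1.
have g2 : forall a b, connect (edge (glue K H)) a b -> a \notin Vs ->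
    connect (edge H) a b.
  move=> a b /connectP [p pp ->] {b}.
  elim: p a pp => [|c p IH] a /=; first by move=> _ h; rewrite connect0.
  move=> /andP [e pc] aV.
  case: (boolP (c \in Vs)) => cV.
    move: e; rewrite /edge glue_in // => e.
    by move: aV; rewrite (subsetP (cl c cV) _ e).
  move: e; rewrite /edge glue_out // => e.
  apply: connect_trans (IH c pc cV); exact: connect1.
move=> i j; case: (boolP (i \in Vs)) => iV.
  rewrite glue_in // => ji; apply/negP => c.
  have jV := subsetP (cl i iV) _ ji.
  have [_ c'] := g1 _ _ c jV.
  by have := acK _ _ ji; rewrite c'.
rewrite glue_out // => ji; apply/negP => c.
by have := acH _ _ ji; rewrite (g2 _ _ c iV).
Qed.

Lemma sub_acyclic G1 G2 : (forall i, G1 i \subset G2 i) -> acyclic G2 -> acyclic G1.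
Proof.
move=> s ac i j ji; apply/negP => c.
have c2 : connect (edge G2) i j.
  apply: connect_sub c => a b e; apply: connect1; exact: (subsetP (s b)).
by have := ac _ _ (subsetP (s i) _ ji); rewrite c2.
Qed.

Lemma restr_acyclic G : acyclic G -> acyclic (restr G).
Proof.
apply: sub_acyclic => i; rewrite ffunE; case: ifP => // _; exact: sub0set.
Qed.

Lemma revg_glue K H x y : x \in Vs -> y \in Vs ->
  revg (glue K H) x y = glue (revg K x y) H.
Proof.
move=> xV yV; apply/ffunP => i; rewrite [LHS]ffunE.
case: (eqVneq i x) => [->|ix].
  by rewrite !glue_in // ffunE eqxx.
case: (eqVneq i y) => [e|iy].
  by subst i; rewrite !glue_in // ffunE (negbTE ix) eqxx.
case: (boolP (i \in Vs)) => iV.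
  by rewrite !glue_in // ffunE (negbTE ix) (negbTE iy).
by rewrite !glue_out.
Qed.

Lemma glue_markov K1 K2 H : acyclic K1 -> acyclic K2 -> acyclic H ->
  markov_eq K1 K2 ->
  (forall a i, a \in K2 i -> a \in Vs /\ i \in Vs) ->
  markov_eq (glue K1 H) (glue K2 H).
Proof.
move=> ac1 ac2 acH m cl.
apply: (@chick_ind _ (fun K => markov_eq (glue K1 H) (glue K H)) K1 K2) => //.
- exact: markov_skel.
- exact: markov_vs.
move=> K x y acK covK sk mK.
have xy : x \in K y by case: covK.
have hxy : adj K2 x y by rewrite -sk /adj xy.
have [xV yV] : x \in Vs /\ y \in Vs.
  case/orP: hxy => h; [exact: cl h | by have [] := cl _ _ h].
have clK : forall i, i \in Vs -> K i \subset Vs.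
  move=> i iV; apply/subsetP => a ai.
  have : adj K2 a i by rewrite -sk /adj ai.
  by case/orP => h; [have [] := cl _ _ h | have [] := cl _ _ h].
have acg : acyclic (glue K H) by apply: glue_acyclic.
have covg : covered (glue K H) x y.
  split; first by rewrite glue_in.
  by rewrite !glue_in //; case: covK.
rewrite -revg_glue //.
apply: markov_trans mK _; exact: markov_rev.
Qed.

End E.



Section F.
Variable R : realType.
Variable d : nat.
Local Open Scope ring_scope.
Implicit Types (G H K : graph d).

Lemma sm_ge (B : {set graph d}) (F : graph d -> R) G : G \in B -> F G <= setmax B F.
Proof.
rewrite /setmax; case: pickP => [G0 h0|h]; last by rewrite h.
move=> GB; rewrite (bigD1 G) //=.
by rewrite le_max lexx.
Qed.

Lemma sm_in (B : {set graph d}) (F : graph d -> R) : B != set0 ->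
  exists2 G, G \in B & setmax B F = F G.
Proof.
rewrite /setmax; case: pickP => [G0 h0|h]; last by case/set0Pn => G; rewrite h.
move=> _; apply: (big_ind (fun v => exists2 G, G \in B & v = F G)).
- by exists G0.
- move=> u v [G1 h1 ->] [G2 h2 ->].
  case: (leP (F G1) (F G2)) => _; [by exists G2 | by exists G1].
- by move=> G hG; exists G.
Qed.

Lemma in_fams G (f : fam d) : (f \in fams G) = (f.2 == G f.1).
Proof.
apply/imsetP/eqP => [[i _ ->] //|e].
by exists f.1 => //; case: f e => a b /= ->.
Qed.

Lemma in_Ufams (B : {set graph d}) f : reflect (exists2 G, G \in B & f \in fams G) (f \in Ufams B).
Proof. exact: bigcupP. Qed.

Lemma in_Gsub k Acc G : (G \in Gsub k Acc) <-> (DAGk k G /\ Acc \subset fams G).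
Proof. by rewrite inE asboolE. Qed.

Lemma in_EC k G G' : (G' \in EC k G) <-> (DAGk k G' /\ markov_eq G G').
Proof. by rewrite inE asboolE. Qed.

Lemma fam_of_DAG k G i : DAGk k G -> is_family k (i, G i).
Proof. by case=> deg ac; rewrite /is_family /= acyc_irr // deg. Qed.

Lemma err_bound k (Hh H : fam d -> R) (V : {set 'I_d}) (e : R) G1 G2 :
  DAGk k G1 -> DAGk k G2 -> (forall v, v \in V -> G1 v = G2 v) ->
  (forall f, is_family k f -> f.1 \notin V -> `|Hh f - H f| <= e / 2) ->
  `|(score Hh G1 - score Hh G2) - (score H G1 - score H G2)| <= (d - #|V|)%:R * e.
Proof.
move=> D1 D2 agree ev.
have -> : (score Hh G1 - score Hh G2) - (score H G1 - score H G2) =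
   \sum_(i : 'I_d) ((Hh (i, G2 i) - H (i, G2 i)) - (Hh (i, G1 i) - H (i, G1 i))).
  rewrite /score !sumrB; lra.
rewrite (bigID (fun i => i \in V)) /=.
rewrite big1 ?add0r; last by move=> i iV; rewrite agree // subrr.
apply: le_trans (ler_norm_sum _ _ _) _.
apply: le_trans (ler_sum _ (fun i _ => _ : _ <= e)) _.
  move=> i iV; apply: le_trans (ler_normB _ _) _.
  have h1 := ev _ (fam_of_DAG i D2) iV; have h2 := ev _ (fam_of_DAG i D1) iV.
  have -> : e = e / 2 + e / 2 by lra.
  exact: lerD.
rewrite sumr_const.
have -> : #|[pred i : 'I_d | i \notin V]| = (d - #|V|)%N.
  have := cardC V; rewrite card_ord.
  have -> : #|[pred i : 'I_d | i \notin V]| = #|[predC V]| by apply: eq_card => i; rewrite !inE.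
  lia.
by rewrite mulr_natl.
Qed.

End F.



Section Main.
Variables (R : realType) (d k : nat) (A : finType) (P : {ffun assign d A -> R}).
Local Open Scope ring_scope.
Local Notation H := (Hfam P).
Local Notation S := (score H).
Definition Sstar := setmax [set G : graph d | `[< DAGk k G >] ] S.

Lemma le_Sstar G : DAGk k G -> S G <= Sstar.
Proof. by move=> h; apply: sm_ge; rewrite inE asboolE. Qed.

Definition Inv (s : state d) :=
  [/\ (forall f, f \in s.1 -> f.1 \in s.2),
      (forall v, v \in s.2 -> exists2 f, f \in s.1 & f.1 = v),
      #|s.1| = #|s.2| &
      exists2 G, G \in Gsub k s.1 & S G = Sstar].

Lemma agree s G1 G2 : Inv s -> G1 \in Gsub k s.1 -> G2 \in Gsub k s.1 ->
  forall v, v \in s.2 -> G1 v = G2 v.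
Proof.
move=> [_ i2 _ _] /in_Gsub [_ s1] /in_Gsub [_ s2] v vV.
have [f fA fv] := i2 v vV.
have := subsetP s1 _ fA; have := subsetP s2 _ fA.
by rewrite !in_fams fv => /eqP <- /eqP <-.
Qed.

Lemma eb_state (Hh : fam d -> R) (Vt : {set 'I_d}) e s G1 G2 :
  Inv s -> Vt \subset s.2 ->
  (forall f, is_family k f -> f.1 \notin Vt -> `|Hh f - H f| <= e / 2) ->
  G1 \in Gsub k s.1 -> G2 \in Gsub k s.1 ->
  score Hh G1 - score Hh G2 <= S G1 - S G2 + (d - #|s.2|)%:R * e /\
  S G1 - S G2 - (d - #|s.2|)%:R * e <= score Hh G1 - score Hh G2.
Proof.
move=> inv sub ev g1 g2.
have D1 := (proj1 (in_Gsub _ _ _ ) g1).1; have D2 := (proj1 (in_Gsub _ _ _ ) g2).1.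
have := @err_bound R d k Hh H s.2 e G1 G2 D1 D2 (agree inv g1 g2).
have ev' : forall f, is_family k f -> f.1 \notin s.2 -> `|Hh f - H f| <= e / 2.
  move=> f ff fV; apply: ev => //; apply: contra fV; exact: (subsetP sub).
move=> /(_ ev') /ler_normlP [h1 h2]; split; lra.
Qed.

Lemma acc_pres (Hh : fam d -> R) (Vt : {set 'I_d}) e s s' :
  Inv s -> Vt \subset s.2 ->
  (forall f, is_family k f -> f.1 \notin Vt -> `|Hh f - H f| <= e / 2) ->
  accept_step k Hh e s s' -> Inv s' /\ Vt \subset s'.2.
Proof.
move=> inv sub ev [Gh [f [[GhS Ghmax] [fU [ff fV] cond] ->]]].
have [i1 i2 i3 [Gs GsS GsE]] := inv.
set th := (d - #|s.2|)%:R * e.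
have DGs := (proj1 (in_Gsub _ _ _) GsS).1.
have DGh := (proj1 (in_Gsub _ _ _) GhS).1.
have [G' G'in fG'] : exists2 G', G' \in EC k Gs :&: Gsub k s.1 & f \in fams G'.
  apply/in_Ufams; apply: cond => //.
  - apply/set0Pn; exists Gs; rewrite inE GsS andbT; apply/in_EC; split=> //.
  - have [G1 G1in ->] : exists2 G1, G1 \in EC k Gh :&: Gsub k s.1 &
        setmax (EC k Gh :&: Gsub k s.1) (score Hh) = score Hh G1.
      apply: sm_in; apply/set0Pn; case/in_Ufams: fU => G hG _; by exists G.
    have le1 : score Hh G1 <= score Hh Gh by apply: Ghmax; move: G1in; rewrite inE => /andP [].
    have le2 : score Hh Gs <= setmax (EC k Gs :&: Gsub k s.1) (score Hh).
      apply: sm_ge; rewrite inE GsS andbT; apply/in_EC; split=> //.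
    have [e1 _] := eb_state inv sub ev GhS GsS.
    have := le_Sstar DGh; rewrite -GsE => le3.
    rewrite -/th in e1 *; lra.
move: G'in; rewrite inE => /andP [/in_EC [DG' mG'] /in_Gsub [_ subG']].
have fA : f \notin s.1 by apply: contra fV; apply: i1.
split; last by apply: subset_trans sub _; apply/subsetP => v vV; rewrite in_setU1 vV orbT.
split => /=.
- move=> g; rewrite in_setU1 => /orP [/eqP ->|gA]; first by rewrite setU11.
  by rewrite in_setU1 i1 ?orbT.
- move=> v; rewrite in_setU1 => /orP [/eqP ->|vV]; first by exists f; rewrite ?setU11.
  by have [g gA gv] := i2 v vV; exists g; rewrite ?in_setU1 ?gA ?orbT.
- by rewrite !cardsU1 fA fV i3.
- exists G'.
    apply/in_Gsub; split=> //; apply/subsetP => g; rewrite in_setU1 => /orP [/eqP ->//|gA].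
    exact: (subsetP subG').
  rewrite -GsE; apply: esym; apply: score_markov => //; [by case: DGs | by case: DG'].
Qed.


Lemma round_pres (Hh : fam d -> R) (Vt : {set 'I_d}) e s s' :
  Inv s -> Vt \subset s.2 ->
  (forall f, is_family k f -> f.1 \notin Vt -> `|Hh f - H f| <= e / 2) ->
  round_exec k Hh e s s' -> [/\ Inv s', Vt \subset s'.2 & noaccept_step k Hh e s'].
Proof.
move=> inv sub ev r; elim: r inv sub => [s0 na|s0 s1 s2 acc _ IH] inv sub.
  by split.
have [inv1 sub1] := acc_pres inv sub ev acc.
exact: IH.
Qed.

Lemma DAGk_glue (Vs : {set 'I_d}) K G : DAGk k K -> DAGk k G ->
  (forall i, i \in Vs -> K i \subset Vs) -> DAGk k (glue Vs K G).
Proof.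
move=> [dK aK] [dG aG] cl; split; last exact: glue_acyclic.
by move=> i; rewrite ffunE; case: ifP.
Qed.

Lemma scoreV_glue (Vs : {set 'I_d}) K G :
  S (glue Vs K G) = S G + scoreV H Vs K - scoreV H Vs G.
Proof.
rewrite /score /scoreV (bigID (fun i => i \in Vs)) /= [X in _ = - X + _ - _](bigID (fun i => i \in Vs)) /=.
rewrite (eq_bigr (fun i => H (i, K i))); last by move=> i iV; rewrite glue_in.
rewrite [X in - (_ + X)](eq_bigr (fun i => H (i, G i))); last by move=> i iV; rewrite glue_out.
lra.
Qed.

Lemma opt_markov (gamma : R) (Vs : {set 'I_d}) Gopt G :
  DAG_over k Vs Gopt ->
  (forall G, DAG_over k Vs G -> ~ markov_eq Gopt G ->
        gamma < scoreV H Vs Gopt - scoreV H Vs G) ->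
  DAGk k G -> (forall v, v \in Vs -> G v \subset Vs) -> Sstar - gamma <= S G ->
  markov_eq Gopt (restr Vs G).
Proof.
move=> [DO clO] gap DG clG hS.
case: (pselect (markov_eq Gopt (restr Vs G))) => // nm; exfalso.
have DR : DAG_over k Vs (restr Vs G).
  split; first split.
  - by move=> i; rewrite ffunE; case: ifP => _; [case: DG|rewrite cards0].
  - apply: restr_acyclic; by case: DG.
  by move=> i; rewrite !ffunE; split => h; [rewrite h; exact: clG | rewrite (negbTE h)].
have := gap _ DR nm.
have -> : scoreV H Vs (restr Vs G) = scoreV H Vs G.
  by rewrite /scoreV; congr (- _); apply: eq_bigr => i iV; rewrite ffunE iV.
have D'' : DAGk k (glue Vs Gopt G) by apply: DAGk_glue => // i iV; case: (clO i) => h _; exact: h.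
have := le_Sstar D''; rewrite scoreV_glue; lra.
Qed.

Lemma final (gamma : R) (Vs : {set 'I_d}) (Hh : fam d -> R) (Vt : {set 'I_d}) e s :
  stable k P gamma Vs -> 0 < gamma -> Inv s -> Vt \subset s.2 ->
  (forall f, is_family k f -> f.1 \notin Vt -> `|Hh f - H f| <= e / 2) ->
  0 <= e -> (d - #|s.2|)%:R * e <= gamma / 2 -> noaccept_step k Hh e s -> Vs \subset s.2.
Proof.
move=> [st1 [Gopt [DGopt [_ gap]]]] g0 inv sub ev e0 thg [Gh [[GhS Ghmax] nacc]].
have [i1 i2 i3 [Gs GsS GsE]] := inv.
have DGh := (proj1 (in_Gsub _ _ _) GhS).1.
have DGs := (proj1 (in_Gsub _ _ _) GsS).1.
set th := (d - #|s.2|)%:R * e in thg.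
have th0 : 0 <= th by rewrite /th mulr_ge0.
apply/subsetP => v vVs; apply/negPn/negP => vV.
apply: (nacc (v, Gh v)); split.
- apply/in_Ufams; exists Gh; last by rewrite in_fams.
  rewrite inE GhS andbT; apply/in_EC; split=> //.
- by split => //; exact: fam_of_DAG.
move=> G DG ne hdiff.
have [GE GEin GEeq] := sm_in (score Hh) ne.
have GhE : Gh \in EC k Gh :&: Gsub k s.1.
  rewrite inE GhS andbT; apply/in_EC; split=> //.
have le1 := sm_ge (score Hh) GhE.
move: (GEin); rewrite inE => /andP [/in_EC [DGE mGE] GES].
have [e1 e2] := eb_state inv sub ev GhS GsS.
have [e3 e4] := eb_state inv sub ev GES GsS.
have m0 := Ghmax Gs GsS.
rewrite -/th in e1 e2 e3 e4 hdiff; rewrite GEeq in hdiff.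
have hGh : Sstar - gamma <= S Gh by lra.
have hGE : Sstar - gamma <= S GE by lra.
have clGh := st1 Gh DGh hGh.
have clGE := st1 GE DGE hGE.
have m1 := opt_markov DGopt gap DGh clGh hGh.
have m2 := opt_markov DGopt gap DGE clGE hGE.
have m21 := markov_trans (markov_sym m2) m1.
have acGE : acyclic GE by case: DGE.
have acGh : acyclic Gh by case: DGh.
have gm := @glue_markov d Vs (restr Vs GE) (restr Vs Gh) GE
   (restr_acyclic acGE) (restr_acyclic acGh) acGE m21.
have e5 : glue Vs (restr Vs GE) GE = GE.
  by apply/ffunP => i; rewrite !ffunE; case: (i \in Vs).
have e6 : glue Vs (restr Vs Gh) GE = glue Vs Gh GE.
  by apply/ffunP => i; rewrite !ffunE; case: (i \in Vs).
rewrite e5 e6 in gm.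
have gm' : markov_eq GE (glue Vs Gh GE).
  apply: gm => a i; rewrite ffunE; case: ifP => iV h; last by rewrite inE in h.
  by split => //; exact: (subsetP (clGh i iV)).
have DG' : DAGk k (glue Vs Gh GE) by apply: DAGk_glue.
apply/in_Ufams; exists (glue Vs Gh GE); last by rewrite in_fams /= glue_in.
rewrite inE; apply/andP; split.
  apply/in_EC; split=> //; exact: markov_trans mGE gm'.
apply/in_Gsub; split=> //; apply/subsetP => g gA.
have gV := i1 g gA.
have ag := agree inv GhS GES gV.
have := subsetP ((proj1 (in_Gsub _ _ _) GhS).2) g gA; rewrite !in_fams => /eqP ->.
by rewrite ffunE; case: ifP => _; rewrite ?ag.
Qed.

End Main.

Unset Implicit Arguments.
Local Open Scope ring_scope.

Lemma div_lt (R : realType) (a b c e : R) : 0 < b -> 0 < e -> a / b < c / e -> a * e < c * b.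
Proof.
move=> hb he h.
have : a < c / e * b by rewrite -ltr_pdivrMr.
by rewrite mulrAC ltr_pdivlMr.
Qed.

Lemma Tbound (R : realType) (d : nat) (eps eps1 : R) (t : nat) :
  (0 < d)%N -> 0 < eps -> 0 < eps1 -> (1 <= t)%N ->
  eps / d%:R < eps_r eps1 t -> (t%:Z <= Tmax d eps eps1)%R.
Proof.
move=> d0 e0 e10 t1 h.
rewrite /eps_r in h.
have dpos : (0 : R) < d%:R by rewrite ltr0n.
have ppos : (0 : R) < 2 ^+ t.-1 by apply: exprn_gt0.
have h2 := @div_lt R _ _ _ _ dpos ppos h.
set X := 2 * d%:R * eps1 / eps.
have Xpos : 0 < X by rewrite /X; apply: divr_gt0 => //; apply: mulr_gt0 => //; apply: mulr_gt0.
have h3 : (2 : R) ^+ t < X.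
  rewrite /X ltr_pdivlMr // (_ : t = t.-1.+1); last lia.
  rewrite exprS; lra.
have l2 : (0 : R) < ln 2 by apply: ln_gt0; lra.
have h4 : ln ((2 : R) ^+ t) < ln X.
  by rewrite ltr_ln // posrE ?exprn_gt0.
have h4' : (t%:R : R) * ln 2 < ln X by rewrite mulr_natl -lnXn.
have h5 : (t%:R : R) < ln X / ln 2 by rewrite ltr_pdivlMr.
rewrite /Tmax -(ler_int R).
apply: le_trans (ceil_ge _).
rewrite -/X; apply: ltW; exact: h5.
Qed.

Theorem lemma6 (R : realType) (d k : nat) (A : finType)
    (P : {ffun (assign d A) -> R}) (gamma : R) (Vs : {set 'I_d})
    (eps eps1 : R) (Hh : nat -> fam d -> R) (st : nat -> state d) (t0 : nat) :
  (0 < k)%N -> is_pmf P -> 0 < gamma -> 0 < eps -> 0 < eps1 ->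
  stable k P gamma Vs ->
  (1 <= t0)%N -> eps_r eps1 t0 <= gamma / (2 * d%:R) ->
  (forall t, (1 <= t < t0)%N -> gamma / (2 * d%:R) < eps_r eps1 t) ->
  st 1%N = (set0, set0) ->
  (forall t, (1 <= t <= t0)%N ->
     eps / (d - #|(st t).2|)%:R < eps_r eps1 t /\
     round_exec k (Hh t) (eps_r eps1 t) (st t) (st t.+1)) ->
  (forall t, (1 <= t < t0)%N -> #|(st t.+1).2| != d) ->
  (forall t, (1 <= t)%N -> (t%:Z <= Tmax d eps eps1)%R -> (t <= t0)%N ->
     forall f : fam d, is_family k f -> f.1 \notin (st t).2 ->
       `|Hh t f - Hfam P f| <= eps_r eps1 t / 2) ->
  (#|Vs| <= #|(st t0.+1).1|)%N.
Proof.
move=> k0 pmf g0 e0 e10 stab t01 et0 _ st1 runs notd event.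
have epos : forall t, 0 < eps_r eps1 t.
  by move=> t; rewrite /eps_r; apply: divr_gt0 => //; apply: exprn_gt0.
have d0 : (0 < d)%N.
  case: (posnP d) => // d0; exfalso.
  move: et0; rewrite d0 mulr0 invr0 mulr0 => h.
  by have := epos t0; rewrite ltNge h.
have Vlt : forall t, (1 <= t <= t0)%N -> (#|(st t).2| < d)%N.
  move=> t /andP [t1 tt0].
  have le : (#|(st t).2| <= d)%N by rewrite -[X in (_ <= X)%N](card_ord d) max_card.
  case: (eqVneq t 1%N) => [->|tn1]; first by rewrite st1 cards0.
  have := notd t.-1 ltac:(lia); rewrite (_ : t.-1.+1 = t); last lia.
  lia.
have ev : forall t, (1 <= t <= t0)%N -> forall f : fam d, is_family k f ->
    f.1 \notin (st t).2 -> `|Hh t f - Hfam P f| <= eps_r eps1 t / 2.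
  move=> t ht; apply: event; try lia.
  apply: Tbound => //; first lia.
  have [h _] := runs t ht.
  apply: le_lt_trans h.
  have hV := Vlt t ht.
  rewrite ler_pdivlMr ?ltr0n; last lia.
  rewrite mulrAC ler_pdivrMr ?ltr0n //.
  rewrite ler_pM2l // ler_nat; lia.
have inv1 : Inv k P (st 1%N).
  rewrite st1; split => //=.
  - by move=> f; rewrite inE.
  - by move=> v; rewrite inE.
  - by rewrite !cards0.
  have ne : [set G : graph d | `[< DAGk k G >] ] != set0.
    apply/set0Pn; exists [ffun _ => set0]; rewrite inE asboolE; split.
      by move=> i; rewrite ffunE cards0.
    by apply: (@rank_acyclic _ _ (fun _ => 0%N)) => i j; rewrite ffunE inE.
  have [G GD GE] := sm_in (score (Hfam P)) ne.
  exists G; last by rewrite /Sstar GE.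
  apply/in_Gsub; split; first by move: GD; rewrite inE asboolE.
  exact: sub0set.
have invs : forall t, (1 <= t <= t0.+1)%N -> Inv k P (st t).
  elim=> [//|t IH] /andP [_ ht].
  case: (eqVneq t 0%N) => [->//|t0'].
  have ht' : (1 <= t <= t0)%N by lia.
  have [_ r] := runs t ht'.
  have [i _ _] := round_pres (IH ltac:(lia)) (subxx _) (ev t ht') r.
  exact: i.
have ht0 : (1 <= t0 <= t0)%N by lia.
have [_ r] := runs t0 ht0.
have [iE sE naE] := round_pres (invs t0 ltac:(lia)) (subxx _) (ev t0 ht0) r.
have hsub : Vs \subset (st t0.+1).2.
  apply: (final stab g0 iE sE (ev t0 ht0)); first exact: ltW.
  apply: le_trans (_ : d%:R * eps_r eps1 t0 <= _).
    apply: ler_wpM2r; first exact: ltW.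
    by rewrite ler_nat leq_subr.
  have dpos : (0 : R) < d%:R by rewrite ltr0n.
  move: et0; rewrite -(ler_pM2l dpos) => h; apply: le_trans h _.
  have dn0 : (d%:R : R) != 0 by rewrite gt_eqF.
  rewrite le_eqVlt; apply/orP; left; apply/eqP; field.
  by rewrite dn0.
  exact: naE.
case: iE => _ _ e _.
apply: (leq_trans (subset_leq_card hsub)).
exact: (eq_leq (esym e)).
Qed.
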